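(* Let $(X,d)$ be a $\delta$-Gromov hyperbolic space, $p\in X$, $\epsilon>0$, and $X^\epsilon=(X,d_\epsilon)$ the uniformized space with base point $p$. If the Gehring-Hayman property for metric boundary points holds for $X^\epsilon$, then the canonical boundary map $\Phi:\partial_GX\to\partial_{d_\epsilon}X^\epsilon$ is bijective.
   Context: Gromov product $(x|y)_p=\frac12(d(p,x)+d(p,y)-d(x,y))$. $\delta$-Gromov hyperbolic: unbounded, proper, geodesic, and $(x|z)_p\ge\min\{(x|y)_p,(y|z)_p\}-\delta$ for all $x,y,z,p$. Uniformized metric: $d_\epsilon(x,y)=\inf_\gamma\int_\gamma e^{-\epsilon d(p,z)}ds(z)$ over $d$-rectifiable curves; $l_{d_\epsilon}$ is $d_\epsilon$-length; $\partial_{d_\epsilon}X^\epsilon=\overline{X^\epsilon}\setminus X^\epsilon$ (closure in the completion); $[x,y]$ a $d$-geodesic. $\partial_GX$ is the set of geodesic rays from $p$ modulo $\gamma\sim\tilde\gamma$ iff $\sup_t d(\gamma(t),\tilde\gamma(t))<\infty$; $\Phi([\gamma])=\lim_{k\to\infty}\gamma(k)$ in $d_\epsilon$ (well defined). GH property for metric boundary points: for every $x\in\partial_{d_\epsilon}X^\epsilon$ and every $(x_n)\subseteq X$ with $d_\epsilon(x_n,x)\to0$ there is $C\ge1$ with $l_{d_\epsilon}([x_n,x_m])\le Cd_\epsilon(x_n,x_m)$ for all $n,m$. *)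

(* Defs.v *)
From Stdlib Require Import Reals List.
From Coquelicot Require Import Coquelicot.
Open Scope R_scope.

Definition is_metric {X : Type} (d : X -> X -> R) : Prop :=
  (forall x y, 0 <= d x y) /\ (forall x y, d x y = 0 <-> x = y) /\
  (forall x y, d x y = d y x) /\ (forall x y z, d x z <= d x y + d y z).

Definition open_set {X : Type} (d : X -> X -> R) (U : X -> Prop) : Prop :=
  forall x, U x -> exists r, 0 < r /\ forall y, d x y < r -> U y.

Definition compact_set {X : Type} (d : X -> X -> R) (K : X -> Prop) : Prop :=
  forall (I : Type) (U : I -> X -> Prop),
    (forall i, open_set d (U i)) -> (forall x, K x -> exists i, U i x) ->
    exists l : list I, forall x, K x -> exists i, In i l /\ U i x.

Definition proper_space {X : Type} (d : X -> X -> R) : Prop :=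
  forall x r, compact_set d (fun y => d x y <= r).

Definition unbounded_space {X : Type} (d : X -> X -> R) : Prop :=
  forall M, exists x y, M < d x y.

Definition geodesic_segment {X : Type} (d : X -> X -> R) (x y : X) (sigma : R -> X) : Prop :=
  sigma 0 = x /\ sigma (d x y) = y /\
  forall s t, 0 <= s <= d x y -> 0 <= t <= d x y -> d (sigma s) (sigma t) = Rabs (s - t).

Definition geodesic_space {X : Type} (d : X -> X -> R) : Prop :=
  forall x y, exists sigma, geodesic_segment d x y sigma.

Definition gromov_prod {X : Type} (d : X -> X -> R) (p x y : X) : R :=
  (d p x + d p y - d x y) / 2.

Definition gromov_hyperbolic {X : Type} (d : X -> X -> R) (delta : R) : Prop :=
  is_metric d /\ unbounded_space d /\ proper_space d /\ geodesic_space d /\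
  forall x y z p,
    gromov_prod d p x z >= Rmin (gromov_prod d p x y) (gromov_prod d p y z) - delta.

Definition partition (a b : R) (n : nat) (t : nat -> R) : Prop :=
  t O = a /\ t n = b /\ forall i, (i < n)%nat -> t i <= t (S i).

Fixpoint psum (f : R -> R -> R) (t : nat -> R) (n : nat) : R :=
  match n with
  | O => 0
  | S k => psum f t k + f (t k) (t (S k))
  end.

Definition curve_length {X : Type} (d : X -> X -> R) (gamma : R -> X) (a b : R) : Rbar :=
  Lub_Rbar (fun s => exists n t, partition a b n t /\
                       s = psum (fun u v => d (gamma u) (gamma v)) t n).

Definition continuous_on {X : Type} (d : X -> X -> R) (gamma : R -> X) (a b : R) : Prop :=
  forall t, a <= t <= b -> forall e, 0 < e -> exists eta, 0 < eta /\
    forall s, a <= s <= b -> Rabs (s - t) < eta -> d (gamma s) (gamma t) < e.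

Definition rectifiable {X : Type} (d : X -> X -> R) (gamma : R -> X) (a b : R) : Prop :=
  a <= b /\ continuous_on d gamma a b /\ is_finite (curve_length d gamma a b).

(** Line integral of a (continuous, nonnegative) density rho along a rectifiable
    curve w.r.t. arclength: supremum of lower Darboux sums
    sum_i (inf_{[t_i,t_{i+1}]} rho o gamma) * length(gamma|[t_i,t_{i+1}]). *)
Definition line_integral {X : Type} (d : X -> X -> R) (rho : X -> R)
  (gamma : R -> X) (a b : R) : R :=
  real (Lub_Rbar (fun s => exists n t, partition a b n t /\
     s = psum (fun u v =>
                 real (Glb_Rbar (fun r => exists w, u <= w <= v /\ r = rho (gamma w)))
                 * real (curve_length d gamma u v)) t n)).

Definition d_eps {X : Type} (d : X -> X -> R) (p : X) (eps : R) (x y : X) : R :=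
  real (Glb_Rbar (fun I => exists gamma a b,
     rectifiable d gamma a b /\ gamma a = x /\ gamma b = y /\
     I = line_integral d (fun z => exp (- eps * d p z)) gamma a b)).

Definition seq_cauchy {X : Type} (e : X -> X -> R) (xs : nat -> X) : Prop :=
  forall r, 0 < r -> exists N, forall n m, (N <= n)%nat -> (N <= m)%nat -> e (xs n) (xs m) < r.

Definition seq_converges_to {X : Type} (e : X -> X -> R) (xs : nat -> X) (x : X) : Prop :=
  forall r, 0 < r -> exists N, forall n, (N <= n)%nat -> e (xs n) x < r.

Definition seq_equiv {X : Type} (e : X -> X -> R) (xs ys : nat -> X) : Prop :=
  forall r, 0 < r -> exists N, forall n, (N <= n)%nat -> e (xs n) (ys n) < r.

(** A point of the metric boundary (completion minus X) is represented by a
    Cauchy sequence with no limit in X; two representatives define the same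
    boundary point iff they are seq_equiv. *)
Definition boundary_seq {X : Type} (e : X -> X -> R) (xs : nat -> X) : Prop :=
  seq_cauchy e xs /\ ~ (exists x, seq_converges_to e xs x).

Definition geodesic_ray {X : Type} (d : X -> X -> R) (p : X) (gamma : R -> X) : Prop :=
  gamma 0 = p /\ forall s t, 0 <= s -> 0 <= t -> d (gamma s) (gamma t) = Rabs (s - t).

Definition ray_equiv {X : Type} (d : X -> X -> R) (gamma gamma' : R -> X) : Prop :=
  exists C, forall t, 0 <= t -> d (gamma t) (gamma' t) <= C.

(** Phi([gamma]) = lim_k gamma(k) in d_eps: the boundary point represented by
    the sequence k |-> gamma(k). *)

Definition ray_seq {X : Type} (gamma : R -> X) : nat -> X := fun k => gamma (INR k).

Definition GH_property {X : Type} (d : X -> X -> R) (p : X) (eps : R) : Prop :=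
  forall ys, boundary_seq (d_eps d p eps) ys ->
  forall xs, seq_equiv (d_eps d p eps) xs ys ->
  exists C, 1 <= C /\ forall n m sigma, geodesic_segment d (xs n) (xs m) sigma ->
    Rbar_le (curve_length (d_eps d p eps) sigma 0 (d (xs n) (xs m)))
            (C * d_eps d p eps (xs n) (xs m)).

Definition Phi_bijective {X : Type} (d : X -> X -> R) (p : X) (eps : R) : Prop :=
  let e := d_eps d p eps in
  (forall gamma, geodesic_ray d p gamma -> boundary_seq e (ray_seq gamma)) /\
  (forall gamma gamma', geodesic_ray d p gamma -> geodesic_ray d p gamma' ->
     ray_equiv d gamma gamma' -> seq_equiv e (ray_seq gamma) (ray_seq gamma')) /\
  (forall gamma gamma', geodesic_ray d p gamma -> geodesic_ray d p gamma' ->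
     seq_equiv e (ray_seq gamma) (ray_seq gamma') -> ray_equiv d gamma gamma') /\
  (forall xs, boundary_seq e xs ->
     exists gamma, geodesic_ray d p gamma /\ seq_equiv e (ray_seq gamma) xs).

(* Main.v *)
From Stdlib Require Import Reals Lra Lia List Classical ClassicalEpsilon ZArith Arith Cantor.
From Coquelicot Require Import Coquelicot.
Require Import Defs.
Open Scope R_scope.


Lemma lub_ub (E : R -> Prop) x : E x -> Rbar_le (Finite x) (Lub_Rbar E).
Proof. intros H. destruct (Lub_Rbar_correct E) as [H1 _]. apply H1; auto. Qed.

Lemma lub_le (E : R -> Prop) B : (forall x, E x -> x <= B) -> Rbar_le (Lub_Rbar E) (Finite B).
Proof. intros H. destruct (Lub_Rbar_correct E) as [_ H2]. apply H2. intros x Hx. simpl. auto. Qed.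

Lemma glb_lb (E : R -> Prop) x : E x -> Rbar_le (Glb_Rbar E) (Finite x).
Proof. intros H. destruct (Glb_Rbar_correct E) as [H1 _]. apply H1; auto. Qed.

Lemma glb_ge (E : R -> Prop) B : (forall x, E x -> B <= x) -> Rbar_le (Finite B) (Glb_Rbar E).
Proof. intros H. destruct (Glb_Rbar_correct E) as [_ H2]. apply H2. intros x Hx. simpl. auto. Qed.

Lemma real_lub_ge (E : R -> Prop) x B : E x -> (forall y, E y -> y <= B) -> x <= real (Lub_Rbar E).
Proof.
  intros Hx HB. pose proof (lub_ub E x Hx) as H1. pose proof (lub_le E B HB) as H2.
  destruct (Lub_Rbar E); simpl in *; tauto.
Qed.

Lemma real_lub_le (E : R -> Prop) B : (forall y, E y -> y <= B) -> 0 <= B -> real (Lub_Rbar E) <= B.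
Proof.
  intros HB H0. pose proof (lub_le E B HB) as H2.
  destruct (Lub_Rbar E); simpl in *; tauto.
Qed.

Lemma real_glb_le (E : R -> Prop) x : E x -> (forall y, E y -> 0 <= y) -> real (Glb_Rbar E) <= x.
Proof.
  intros Hx H0. pose proof (glb_lb E x Hx) as H1. pose proof (glb_ge E 0 H0) as H2.
  destruct (Glb_Rbar E); simpl in *; tauto.
Qed.

Lemma real_glb_ge (E : R -> Prop) x B : E x -> (forall y, E y -> B <= y) -> B <= real (Glb_Rbar E).
Proof.
  intros Hx H0. pose proof (glb_lb E x Hx) as H1. pose proof (glb_ge E B H0) as H2.
  destruct (Glb_Rbar E); simpl in *; tauto.
Qed.

Lemma psum_ext f t t' n : (forall i, (i <= n)%nat -> t i = t' i) -> psum f t n = psum f t' n.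
Proof.
  induction n; intros H; simpl; auto.
  rewrite IHn by (intros; apply H; lia). rewrite (H n) by lia. rewrite (H (S n)) by lia. auto.
Qed.

Lemma partition_mono a b n t : partition a b n t -> forall i j, (i <= j <= n)%nat -> t i <= t j.
Proof.
  intros [_ [_ H]] i j Hij. destruct Hij as [H1 H2].
  induction j. assert (i = 0%nat) by lia; subst; lra.
  destruct (Nat.eq_dec i (S j)). subst; lra.
  assert (t i <= t j) by (apply IHj; lia). specialize (H j ltac:(lia)). lra.
Qed.

Lemma partition_range a b n t : partition a b n t -> forall i, (i <= n)%nat -> a <= t i <= b.
Proof.
  intros Hp i Hi. pose proof (partition_mono a b n t Hp) as M. destruct Hp as [H0 [Hn _]].
  split. rewrite <- H0. apply M; lia. rewrite <- Hn. apply M; lia.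
Qed.

Lemma partition_le a b n t : partition a b n t -> a <= b.
Proof. intros Hp. pose proof (partition_range a b n t Hp 0%nat ltac:(lia)). lra. Qed.

Definition app_pt (t : nat -> R) (n : nat) (c : R) : nat -> R :=
  fun i => if Nat.leb i n then t i else c.

Lemma partition_app a b n t c : partition a b n t -> b <= c -> partition a c (S n) (app_pt t n c).
Proof.
  intros [H0 [Hn H]] Hc. unfold app_pt. split; [|split].
  - simpl. auto.
  - replace (Nat.leb (S n) n) with false by (symmetry; apply Nat.leb_gt; lia). auto.
  - intros i Hi. destruct (Nat.leb i n) eqn:E1; destruct (Nat.leb (S i) n) eqn:E2.
    + apply H. apply Nat.leb_le in E2. lia.
    + apply Nat.leb_le in E1. apply Nat.leb_gt in E2. assert (i = n) by lia. subst. lra.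
    + apply Nat.leb_gt in E1. apply Nat.leb_le in E2. lia.
    + apply Nat.leb_gt in E1. lia.
Qed.

Lemma psum_app f t n c : psum f (app_pt t n c) (S n) = psum f t n + f (t n) c.
Proof.
  simpl. rewrite (psum_ext f (app_pt t n c) t n).
  unfold app_pt. rewrite Nat.leb_refl. replace (Nat.leb (S n) n) with false by (symmetry; apply Nat.leb_gt; lia). auto.
  intros i Hi. unfold app_pt. replace (Nat.leb i n) with true by (symmetry; apply Nat.leb_le; lia). auto.
Qed.

Lemma partition_prefix a b k t : partition a b (S k) t -> partition a (t k) k t.
Proof. intros [H0 [Hn H]]. split; [auto|split; auto]. Qed.

Definition one_pt (u v : R) : nat -> R := fun i => match i with O => u | _ => v end.
Lemma partition_one u v : u <= v -> partition u v 1 (one_pt u v).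
Proof. intros H. split; [auto|split; [auto|]]. intros i Hi. assert (i = 0%nat) by lia. subst. simpl. auto. Qed.
Lemma psum_one f u v : psum f (one_pt u v) 1 = f u v.
Proof. simpl. lra. Qed.

Lemma partition_zero u : partition u u 0 (fun _ => u).
Proof. split; [auto|split;[auto|]]. intros; lia. Qed.

Lemma psum_split (f : R -> R -> R) (A B : R)
  (Hsub : forall u v w, A <= u -> u <= v -> v <= w -> w <= B -> f u w <= f u v + f v w) :
  forall n u w t, partition u w n t -> A <= u -> w <= B -> forall v, u <= v <= w ->
  exists n1 t1 n2 t2, partition u v n1 t1 /\ partition v w n2 t2 /\
     psum f t n <= psum f t1 n1 + psum f t2 n2.
Proof.
  induction n; intros u w t Hp HA HB v Hv.
  - destruct Hp as [H0 [Hn _]]. simpl in *. subst u w.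
    assert (v = t 0%nat) by lra. subst v.
    exists 0%nat, (fun _ => t 0%nat), 0%nat, (fun _ => t 0%nat). split; [apply partition_zero|split;[apply partition_zero|]].
    simpl. lra.
  - pose proof (partition_prefix _ _ _ _ Hp) as Hp'.
    pose proof (partition_range _ _ _ _ Hp) as Hr.
    pose proof (Hr n ltac:(lia)) as Hk. destruct Hp as [H0 [Hn Hm]].
    destruct (Rle_dec v (t n)) as [Hvk|Hvk].
    + destruct (IHn u (t n) t Hp' HA ltac:(lra) v ltac:(lra)) as [n1 [t1 [n2 [t2 [P1 [P2 Hs]]]]]].
      exists n1, t1, (S n2), (app_pt t2 n2 w). split; [auto|split].
      * apply (partition_app v (t n)); auto. specialize (Hm n ltac:(lia)). lra.
      * rewrite psum_app. destruct P2 as [_ [P2n _]]. rewrite P2n. simpl. rewrite Hn. lra.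
    + exists (S n), (app_pt t n v), 1%nat, (one_pt v w). split;[|split].
      * apply (partition_app u (t n)); auto. lra.
      * apply partition_one; lra.
      * rewrite psum_app, psum_one. simpl. rewrite Hn.
        pose proof (Hsub (t n) v w ltac:(lra) ltac:(lra) ltac:(lra) ltac:(lra)). lra.
Qed.

Definition cat_pt (t1 : nat -> R) (n1 : nat) (t2 : nat -> R) : nat -> R :=
  fun i => if Nat.leb i n1 then t1 i else t2 (i - n1)%nat.

Lemma psum_cat f t1 n1 t2 n2 : t1 n1 = t2 0%nat ->
  psum f (cat_pt t1 n1 t2) (n1 + n2) = psum f t1 n1 + psum f t2 n2.
Proof.
  intros Hj. induction n2.
  - simpl. rewrite Nat.add_0_r. apply Rminus_diag_uniq_sym. rewrite (psum_ext f (cat_pt t1 n1 t2) t1 n1). lra.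
    intros i Hi. unfold cat_pt. replace (Nat.leb i n1) with true by (symmetry; apply Nat.leb_le; lia). auto.
  - replace (n1 + S n2)%nat with (S (n1 + n2)) by lia. simpl. rewrite IHn2.
    unfold cat_pt. replace (Nat.leb (S (n1 + n2)) n1) with false by (symmetry; apply Nat.leb_gt; lia).
    replace (S (n1 + n2) - n1)%nat with (S n2) by lia.
    destruct (Nat.leb (n1 + n2) n1) eqn:E.
    + apply Nat.leb_le in E. assert (n2 = 0%nat) by lia. subst. rewrite Nat.add_0_r. rewrite Hj. lra.
    + replace (n1 + n2 - n1)%nat with n2 by lia. lra.
Qed.

Lemma partition_cat u v w n1 t1 n2 t2 : partition u v n1 t1 -> partition v w n2 t2 ->
  partition u w (n1 + n2) (cat_pt t1 n1 t2).
Proof.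
  intros [A0 [An Am]] [B0 [Bn Bm]]. unfold cat_pt. split; [|split].
  - simpl. auto.
  - destruct (Nat.leb (n1 + n2) n1) eqn:E.
    + apply Nat.leb_le in E. assert (n2 = 0%nat) as E2 by lia. rewrite E2 in *. rewrite Nat.add_0_r. rewrite An. rewrite <- B0, Bn. auto.
    + replace (n1 + n2 - n1)%nat with n2 by lia. auto.
  - intros i Hi. destruct (Nat.leb i n1) eqn:E1; destruct (Nat.leb (S i) n1) eqn:E2.
    + apply Am. apply Nat.leb_le in E2. lia.
    + apply Nat.leb_le in E1. apply Nat.leb_gt in E2. assert (i = n1) as E3 by lia. rewrite E3.
      replace (S n1 - n1)%nat with 1%nat by lia. rewrite An. rewrite <- B0. apply Bm. lia.
    + apply Nat.leb_gt in E1. apply Nat.leb_le in E2. lia.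
    + apply Nat.leb_gt in E1. replace (S i - n1)%nat with (S (i - n1)) by lia. apply Bm. lia.
Qed.

Lemma lub_mono (E1 E2 : R -> Prop) : (forall x, E1 x -> exists y, E2 y /\ x <= y) ->
  Rbar_le (Lub_Rbar E1) (Lub_Rbar E2).
Proof.
  intros H. destruct (Lub_Rbar_correct E1) as [_ H2]. apply H2.
  intros x Hx. destruct (H x Hx) as [y [Hy Hxy]]. eapply Rbar_le_trans with (Finite y). simpl; auto.
  apply lub_ub; auto.
Qed.

Lemma psum_nonneg f t n : (forall i, (i < n)%nat -> 0 <= f (t i) (t (S i))) -> 0 <= psum f t n.
Proof.
  induction n; intros H; simpl. lra.
  pose proof (H n ltac:(lia)). assert (0 <= psum f t n) by (apply IHn; intros; apply H; lia). lra.
Qed.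

Lemma psum_le f g t n : (forall i, (i < n)%nat -> f (t i) (t (S i)) <= g (t i) (t (S i))) -> psum f t n <= psum g t n.
Proof.
  induction n; intros H; simpl. lra.
  pose proof (H n ltac:(lia)). assert (psum f t n <= psum g t n) by (apply IHn; intros; apply H; lia). lra.
Qed.

Section CurveLength.
Variable X : Type.
Variable dd : X -> X -> R.
Hypothesis Hnn : forall x y, 0 <= dd x y.
Hypothesis Htri : forall x y z, dd x z <= dd x y + dd y z.

Definition segd (g : R -> X) : R -> R -> R := fun u v => dd (g u) (g v).

Lemma cl_ps g u v n t : partition u v n t -> Rbar_le (Finite (psum (segd g) t n)) (curve_length dd g u v).
Proof. intros Hp. unfold curve_length. apply lub_ub. exists n, t. split; auto. Qed.

Lemma cl_ge_one g u v : u <= v -> Rbar_le (Finite (dd (g u) (g v))) (curve_length dd g u v).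
Proof. intros H. pose proof (cl_ps g u v 1 (one_pt u v) (partition_one u v H)). rewrite psum_one in H0. auto. Qed.

Lemma cl_mono g a u v b : a <= u -> u <= v -> v <= b ->
  Rbar_le (curve_length dd g u v) (curve_length dd g a b).
Proof.
  intros H1 H2 H3. unfold curve_length. apply lub_mono. intros x [n [t [Hp ->]]].
  pose proof (partition_cat a u v 1 (one_pt a u) n t (partition_one a u H1) Hp) as P1.
  pose proof (partition_app _ _ _ _ b P1 H3) as P2.
  eexists. split. exists (S (1 + n)), (app_pt (cat_pt (one_pt a u) 1 t) (1 + n) b). split; [exact P2|reflexivity].
  rewrite psum_app. rewrite psum_cat. rewrite psum_one.
  pose proof (Hnn (g a) (g u)). pose proof (Hnn (g (cat_pt (one_pt a u) 1 t (1 + n))) (g b)). unfold segd in *. lra.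
  destruct Hp as [Hp0 _]. simpl. auto.
Qed.

Lemma cl_nonneg g u v : u <= v -> Rbar_le (Finite 0) (curve_length dd g u v).
Proof. intros H. eapply Rbar_le_trans. 2: apply cl_ge_one; auto. simpl. auto. Qed.

Definition RL g u v := real (curve_length dd g u v).

Lemma cl_fin g a b u v : is_finite (curve_length dd g a b) -> a <= u -> u <= v -> v <= b ->
  curve_length dd g u v = Finite (RL g u v) /\ 0 <= RL g u v /\ RL g u v <= RL g a b /\
  dd (g u) (g v) <= RL g u v.
Proof.
  intros Hf H1 H2 H3. pose proof (cl_mono g a u v b H1 H2 H3) as M. pose proof (cl_ge_one g u v H2) as G.
  pose proof (cl_nonneg g u v H2) as N. unfold RL. unfold is_finite in Hf. rewrite <- Hf in M.
  destruct (curve_length dd g u v) eqn:E; simpl in *; try tauto.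
  all: repeat split; auto; lra.
Qed.

Lemma RL_ps g a b u v n t : is_finite (curve_length dd g a b) -> a <= u -> v <= b ->
  partition u v n t -> psum (segd g) t n <= RL g u v.
Proof.
  intros Hf H1 H3 Hp. pose proof (partition_le _ _ _ _ Hp) as H2.
  destruct (cl_fin g a b u v Hf H1 H2 H3) as [E _]. pose proof (cl_ps g u v n t Hp) as K. rewrite E in K. auto.
Qed.

Lemma RL_sub g a b u v w : is_finite (curve_length dd g a b) -> a <= u -> u <= v -> v <= w -> w <= b ->
  RL g u w <= RL g u v + RL g v w.
Proof.
  intros Hf H1 H2 H3 H4.
  destruct (cl_fin g a b u w Hf H1 ltac:(lra) H4) as [E _].
  assert (Rbar_le (curve_length dd g u w) (Finite (RL g u v + RL g v w))).
  { apply lub_le. intros x [n [t [Hp ->]]].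
    assert (Hs0 : forall u0 v0 w0, a <= u0 -> u0 <= v0 -> v0 <= w0 -> w0 <= b -> segd g u0 w0 <= segd g u0 v0 + segd g v0 w0).
    { intros; unfold segd; apply Htri. }
    destruct (psum_split (segd g) a b Hs0) with (n := n) (u := u) (w := w) (t := t) (v := v) as [n1 [t1 [n2 [t2 [P1 [P2 Hs]]]]]]; auto; try lra.
    pose proof (RL_ps g a b u v n1 t1 Hf H1 ltac:(lra) P1). pose proof (RL_ps g a b v w n2 t2 Hf ltac:(lra) H4 P2). unfold segd in *. lra. }
  rewrite E in H. simpl in H. auto.
Qed.

Lemma RL_super g a b u v w : is_finite (curve_length dd g a b) -> a <= u -> u <= v -> v <= w -> w <= b ->
  RL g u v + RL g v w <= RL g u w.
Proof.
  intros Hf H1 H2 H3 H4.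
  destruct (cl_fin g a b u v Hf H1 H2 ltac:(lra)) as [E1 _].
  destruct (cl_fin g a b v w Hf ltac:(lra) H3 H4) as [E2 _].
  assert (K : forall s1 s2, (exists n t, partition u v n t /\ s1 = psum (segd g) t n) ->
                     (exists n t, partition v w n t /\ s2 = psum (segd g) t n) -> s1 + s2 <= RL g u w).
  { intros s1 s2 [n1 [t1 [P1 ->]]] [n2 [t2 [P2 ->]]].
    assert (J : t1 n1 = t2 0%nat) by (destruct P1 as [_ [P1n _]]; destruct P2 as [P20 _]; congruence).
    rewrite <- (psum_cat _ _ _ _ _ J). apply (RL_ps g a b u w _ _ Hf H1 ltac:(lra)).
    eapply partition_cat; eauto. }
  assert (A1 : Rbar_le (curve_length dd g v w) (Finite (RL g u w - RL g u v))).
  { apply lub_le. intros s2 Hs2.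
    assert (Rbar_le (curve_length dd g u v) (Finite (RL g u w - s2))).
    { apply lub_le. intros s1 Hs1. pose proof (K s1 s2 Hs1 Hs2). lra. }
    rewrite E1 in H. simpl in H. lra. }
  rewrite E2 in A1. simpl in A1. lra.
Qed.

Lemma RL_psum g a b : is_finite (curve_length dd g a b) ->
  forall n u w t, partition u w n t -> a <= u -> w <= b -> psum (RL g) t n <= RL g u w.
Proof.
  intros Hf. induction n; intros u w t Hp H1 H2.
  - simpl. destruct Hp as [H0 [Hn _]]. simpl in *. subst u w.
    destruct (cl_fin g a b (t 0%nat) (t 0%nat) Hf H1 ltac:(lra) H2) as [_ [K _]]. auto.
  - pose proof (partition_prefix _ _ _ _ Hp) as Hp'. pose proof (partition_range _ _ _ _ Hp n ltac:(lia)).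
    destruct Hp as [H0 [Hn Hm]]. specialize (Hm n ltac:(lia)).
    pose proof (IHn u (t n) t Hp' H1 ltac:(lra)). simpl.
    pose proof (RL_super g a b u (t n) (t (S n)) Hf H1 ltac:(lra) Hm ltac:(lra)). rewrite Hn in *. lra.
Qed.

End CurveLength.


Section LineInt.
Variable X : Type.
Variable d : X -> X -> R.
Hypothesis Hm : is_metric d.

Lemma Hnn : forall x y, 0 <= d x y. Proof. apply Hm. Qed.
Lemma Hsym : forall x y, d x y = d y x. Proof. apply Hm. Qed.
Lemma Htri : forall x y z, d x z <= d x y + d y z. Proof. apply Hm. Qed.
Lemma Hrefl : forall x, d x x = 0. Proof. intros. apply Hm. auto. Qed.
Lemma Hzero : forall x y, d x y = 0 -> x = y. Proof. intros. apply Hm. auto. Qed.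

Variable rho : X -> R.
Hypothesis rho_nn : forall z, 0 <= rho z.
Hypothesis rho_le1 : forall z, rho z <= 1.

Definition minf (g : R -> X) u v := real (Glb_Rbar (fun r => exists w, u <= w <= v /\ r = rho (g w))).
Definition term (g : R -> X) := fun u v => real (Glb_Rbar (fun r => exists w, u <= w <= v /\ r = rho (g w))) * real (curve_length d g u v).

Lemma minf_le g u v w : u <= w <= v -> minf g u v <= rho (g w).
Proof.
  intros H. unfold minf. apply real_glb_le. exists w; auto. intros y [w' [_ ->]]. auto.
Qed.

Lemma minf_ge g u v B : u <= v -> (forall w, u <= w <= v -> B <= rho (g w)) -> B <= minf g u v.
Proof.
  intros H HB. unfold minf. apply real_glb_ge with (x := rho (g u)). exists u. split; auto; lra.
  intros y [w [Hw ->]]. auto.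
Qed.

Lemma minf_nn g u v : u <= v -> 0 <= minf g u v.
Proof. intros H. apply minf_ge; auto. Qed.
Lemma minf_le1 g u v : u <= v -> minf g u v <= 1.
Proof. intros H. pose proof (minf_le g u v u ltac:(lra)). pose proof (rho_le1 (g u)). lra. Qed.

Lemma minf_mono g u v u' v' : u' <= u -> u <= v -> v <= v' -> minf g u' v' <= minf g u v.
Proof. intros. apply minf_ge; auto. intros w Hw. apply minf_le. lra. Qed.

Definition LIset g a b := fun s => exists n t, partition a b n t /\ s = psum (term g) t n.

Lemma LI_def g a b : line_integral d rho g a b = real (Lub_Rbar (LIset g a b)).
Proof. reflexivity. Qed.

Lemma term_nn g a b u v : is_finite (curve_length d g a b) -> a <= u -> u <= v -> v <= b -> 0 <= term g u v.
Proof.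
  intros Hf H1 H2 H3. unfold term. destruct (cl_fin X d Hnn g a b u v Hf H1 H2 H3) as [_ [K _]].
  apply Rmult_le_pos. apply minf_nn; auto. unfold RL in K. auto.
Qed.

Lemma term_le g a b u v : is_finite (curve_length d g a b) -> a <= u -> u <= v -> v <= b -> term g u v <= RL X d g u v.
Proof.
  intros Hf H1 H2 H3. unfold term. destruct (cl_fin X d Hnn g a b u v Hf H1 H2 H3) as [_ [K _]].
  pose proof (minf_le1 g u v H2). pose proof (minf_nn g u v H2). unfold minf in *. unfold RL in *.
  apply Rmult_le_compat_r with (r := real (curve_length d g u v)) in H; auto. lra.
Qed.

Lemma LIset_bound g a b s : is_finite (curve_length d g a b) -> LIset g a b s -> 0 <= s <= RL X d g a b.
Proof.
  intros Hf [n [t [Hp ->]]]. pose proof (partition_range _ _ _ _ Hp) as Hr. destruct Hp as [H0 [Hn Hmo]]. split.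
  - apply psum_nonneg. intros i Hi. pose proof (Hr i ltac:(lia)). pose proof (Hr (S i) ltac:(lia)).
    pose proof (Hmo i Hi). apply (term_nn g a b); auto; lra.
  - apply Rle_trans with (psum (RL X d g) t n).
    + apply psum_le. intros i Hi. pose proof (Hr i ltac:(lia)). pose proof (Hr (S i) ltac:(lia)).
      pose proof (Hmo i Hi). apply (term_le g a b); auto; lra.
    + apply (RL_psum X d Hnn g a b Hf n a b t); try lra. split; auto.
Qed.

Lemma LI_ge g a b n t : is_finite (curve_length d g a b) -> partition a b n t -> psum (term g) t n <= line_integral d rho g a b.
Proof.
  intros Hf Hp. rewrite LI_def. apply real_lub_ge with (B := RL X d g a b).
  exists n, t; auto. intros y Hy. apply (LIset_bound g a b y Hf Hy).
Qed.

Lemma LI_nn g a b : is_finite (curve_length d g a b) -> a <= b -> 0 <= line_integral d rho g a b.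
Proof.
  intros Hf Hab. pose proof (LI_ge g a b 1 (one_pt a b) Hf (partition_one a b Hab)). rewrite psum_one in H.
  pose proof (term_nn g a b a b Hf ltac:(lra) Hab ltac:(lra)). lra.
Qed.

Lemma LI_le g a b B : 0 <= B -> (forall n t, partition a b n t -> psum (term g) t n <= B) -> line_integral d rho g a b <= B.
Proof.
  intros H0 H. rewrite LI_def. apply real_lub_le; auto. intros y [n [t [Hp ->]]]. auto.
Qed.

Definition iso (g : R -> X) a b := forall s t, a <= s <= b -> a <= t <= b -> d (g s) (g t) = Rabs (s - t).

Lemma psum_iso g a b n t : iso g a b -> (forall i, (i <= n)%nat -> a <= t i <= b) -> (forall i, (i < n)%nat -> t i <= t (S i)) ->
  psum (segd X d g) t n = t n - t 0%nat.
Proof.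
  intros Hi. induction n; intros Hr Hmo; simpl. lra.
  rewrite IHn by (intros; try apply Hr; try apply Hmo; lia). unfold segd. rewrite Hi by (apply Hr; lia).
  rewrite Rabs_left1. lra. pose proof (Hmo n ltac:(lia)). lra.
Qed.

Lemma cl_iso g a b u v : iso g a b -> a <= u -> u <= v -> v <= b -> curve_length d g u v = Finite (v - u).
Proof.
  intros Hi H1 H2 H3. apply Rbar_le_antisym.
  - apply lub_le. intros x [n [t [Hp ->]]]. pose proof (partition_range _ _ _ _ Hp) as Hr.
    destruct Hp as [H0 [Hn Hmo]]. simpl. change (psum (fun u0 v0 => d (g u0) (g v0)) t n) with (psum (segd X d g) t n).
    rewrite (psum_iso g a b n t Hi); [lra| |auto].
    intros i Hii. pose proof (Hr i Hii). lra.
  - pose proof (cl_ge_one X d g u v H2). rewrite Hi in H by lra. rewrite Rabs_left1 in H by lra.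
    replace (v - u) with (- (u - v)) by ring. auto.
Qed.

Lemma iso_rect g a b : iso g a b -> a <= b -> rectifiable d g a b.
Proof.
  intros Hi Hab. split; auto. split.
  - intros t Ht e He. exists e. split; auto. intros s Hs Hst. rewrite Hi by lra. auto.
  - rewrite (cl_iso g a b a b Hi) by lra. reflexivity.
Qed.

Lemma LI_iso_tele g a b (G : R -> R) : iso g a b -> a <= b ->
  (forall u v, a <= u -> u <= v -> v <= b -> minf g u v * (v - u) <= G v - G u) ->
  line_integral d rho g a b <= G b - G a.
Proof.
  intros Hi Hab HG. apply LI_le.
  - pose proof (HG a b ltac:(lra) Hab ltac:(lra)). pose proof (minf_nn g a b Hab). nra.
  - intros n t Hp. pose proof (partition_range _ _ _ _ Hp) as Hr. destruct Hp as [H0 [Hn Hmo]].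
    rewrite <- H0, <- Hn. clear H0 Hn.
    induction n; simpl. lra.
    assert (psum (term g) t n <= G (t n) - G (t 0%nat)) by (apply IHn; intros; [apply Hmo | apply Hr]; lia).
    pose proof (Hr n ltac:(lia)). pose proof (Hr (S n) ltac:(lia)). pose proof (Hmo n ltac:(lia)).
    unfold term at 2. rewrite (cl_iso g a b _ _ Hi) by lra. simpl.
    pose proof (HG (t n) (t (S n)) ltac:(lra) ltac:(lra) ltac:(lra)). unfold minf in *. lra.
Qed.


Lemma psum_eqf f f' t n : (forall i, (i < n)%nat -> f (t i) (t (S i)) = f' (t i) (t (S i))) -> psum f t n = psum f' t n.
Proof.
  induction n; intros H; simpl; auto. rewrite IHn by (intros; apply H; lia). rewrite H by lia. auto.
Qed.

Lemma cl_ext g g' u v : (forall w, u <= w <= v -> g w = g' w) -> curve_length d g u v = curve_length d g' u v.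
Proof.
  intros H. unfold curve_length. apply Lub_Rbar_eqset. intros x; split; intros [n [t [Hp ->]]]; exists n, t; split; auto;
  apply psum_eqf; intros i Hi; pose proof (partition_range _ _ _ _ Hp i ltac:(lia));
  pose proof (partition_range _ _ _ _ Hp (S i) ltac:(lia)); rewrite !H by lra; auto.
Qed.

Lemma minf_ext g g' u v : (forall w, u <= w <= v -> g w = g' w) -> minf g u v = minf g' u v.
Proof.
  intros H. unfold minf. f_equal. apply Glb_Rbar_eqset. intros x; split; intros [w [Hw ->]]; exists w; split; auto;
  rewrite H; auto.
Qed.

Lemma term_ext g g' u v : (forall w, u <= w <= v -> g w = g' w) -> term g u v = term g' u v.
Proof.
  intros H. unfold term. change (minf g u v * real (curve_length d g u v) = minf g' u v * real (curve_length d g' u v)).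
  rewrite (minf_ext g g' u v H), (cl_ext g g' u v H). auto.
Qed.

Lemma psum_shift f c t n : psum (fun a b => f (a + c) (b + c)) t n = psum f (fun i => t i + c) n.
Proof. induction n; simpl; auto. rewrite IHn. auto. Qed.

Lemma partition_shift a b n t c : partition a b n t -> partition (a + c) (b + c) n (fun i => t i + c).
Proof. intros [H0 [Hn H]]. split; [rewrite H0; auto|split;[rewrite Hn; auto|]]. intros i Hi. specialize (H i Hi). lra. Qed.

Lemma cl_shift g c u v : curve_length d (fun s => g (s + c)) u v = curve_length d g (u + c) (v + c).
Proof.
  unfold curve_length. apply Lub_Rbar_eqset. intros x; split; intros [n [t [Hp ->]]].
  - exists n, (fun i => t i + c). split. apply partition_shift; auto. apply (psum_shift (fun a b => d (g a) (g b))).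
  - exists n, (fun i => t i - c). split.
    + replace u with (u + c + - c) by ring. replace v with (v + c + - c) by ring. apply partition_shift; auto.
    + rewrite (psum_shift (fun a b => d (g a) (g b))). apply psum_ext. intros. f_equal. ring.
Qed.

Lemma minf_shift g c u v : minf (fun s => g (s + c)) u v = minf g (u + c) (v + c).
Proof.
  unfold minf. f_equal. apply Glb_Rbar_eqset. intros x; split; intros [w [Hw ->]].
  - exists (w + c). split; auto. lra.
  - exists (w - c). split. lra. replace (w - c + c) with w by ring. auto.
Qed.

Lemma term_shift g c u v : term (fun s => g (s + c)) u v = term g (u + c) (v + c).
Proof.
  unfold term. change (minf (fun s => g (s + c)) u v * real (curve_length d (fun s => g (s + c)) u v) =
                       minf g (u + c) (v + c) * real (curve_length d g (u + c) (v + c))).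
  rewrite minf_shift, cl_shift. auto.
Qed.

Lemma LI_shift g c a b : line_integral d rho (fun s => g (s + c)) a b = line_integral d rho g (a + c) (b + c).
Proof.
  rewrite !LI_def. f_equal. apply Lub_Rbar_eqset. intros x; split; intros [n [t [Hp ->]]].
  - exists n, (fun i => t i + c). split. apply partition_shift; auto.
    rewrite (psum_eqf _ (fun u v => term g (u + c) (v + c))). apply psum_shift. intros; apply term_shift.
  - exists n, (fun i => t i - c). split.
    + replace a with (a + c + - c) by ring. replace b with (b + c + - c) by ring. apply partition_shift; auto.
    + symmetry. rewrite (psum_eqf (term (fun s => g (s + c))) (fun u v => term g (u + c) (v + c))) by (intros; apply term_shift).
      rewrite psum_shift. apply psum_ext. intros. f_equal. ring.
Qed.

Lemma rect_shift g c a b : rectifiable d g (a + c) (b + c) -> rectifiable d (fun s => g (s + c)) a b.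
Proof.
  intros [H1 [H2 H3]]. split; [lra|split].
  - intros t Ht e He. destruct (H2 (t + c) ltac:(lra) e He) as [eta [Heta K]]. exists eta. split; auto.
    intros s Hs Hst. apply K. lra. replace (s + c - (t + c)) with (s - t) by ring. auto.
  - rewrite cl_shift. auto.
Qed.

Definition ccat (g1 g2 : R -> X) (m : R) : R -> X := fun t => if Rle_dec t m then g1 t else g2 t.

Lemma ccat_l g1 g2 m t : t <= m -> ccat g1 g2 m t = g1 t.
Proof. intros H. unfold ccat. destruct (Rle_dec t m); auto; lra. Qed.
Lemma ccat_r g1 g2 m t : g1 m = g2 m -> m <= t -> ccat g1 g2 m t = g2 t.
Proof. intros E H. unfold ccat. destruct (Rle_dec t m); auto. assert (t = m) by lra. subst. auto. Qed.

Lemma rect_ccat g1 g2 a m b : rectifiable d g1 a m -> rectifiable d g2 m b -> g1 m = g2 m ->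
  rectifiable d (ccat g1 g2 m) a b /\ line_integral d rho (ccat g1 g2 m) a b <= line_integral d rho g1 a m + line_integral d rho g2 m b.
Proof.
  intros [A1 [A2 A3]] [B1 [B2 B3]] E.
  set (g := ccat g1 g2 m).
  assert (L1 : forall u v, a <= u -> v <= m -> curve_length d g u v = curve_length d g1 u v).
  { intros u v Hu Hv. apply cl_ext. intros w Hw. apply ccat_l. lra. }
  assert (L2 : forall u v, m <= u -> v <= b -> curve_length d g u v = curve_length d g2 u v).
  { intros u v Hu Hv. apply cl_ext. intros w Hw. apply ccat_r; auto. lra. }
  assert (Hsegsub : forall u v w, a <= u -> u <= v -> v <= w -> w <= b -> segd X d g u w <= segd X d g u v + segd X d g v w).
  { intros; unfold segd; apply Htri. }
  assert (Hfin : Rbar_le (curve_length d g a b) (Finite (RL X d g1 a m + RL X d g2 m b))).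
  { apply lub_le. intros x [n [t [Hp ->]]].
    destruct (psum_split (segd X d g) a b Hsegsub n a b t Hp ltac:(lra) ltac:(lra) m ltac:(lra)) as [n1 [t1 [n2 [t2 [P1 [P2 Hs]]]]]].
    assert (psum (segd X d g) t1 n1 = psum (segd X d g1) t1 n1).
    { apply psum_eqf. intros i Hi. pose proof (partition_range _ _ _ _ P1 i ltac:(lia)).
      pose proof (partition_range _ _ _ _ P1 (S i) ltac:(lia)). unfold segd, g. rewrite !ccat_l by lra. auto. }
    assert (psum (segd X d g) t2 n2 = psum (segd X d g2) t2 n2).
    { apply psum_eqf. intros i Hi. pose proof (partition_range _ _ _ _ P2 i ltac:(lia)).
      pose proof (partition_range _ _ _ _ P2 (S i) ltac:(lia)). unfold segd, g. rewrite !ccat_r by (auto; lra). auto. }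
    pose proof (RL_ps X d Hnn g1 a m a m n1 t1 A3 ltac:(lra) ltac:(lra) P1).
    pose proof (RL_ps X d Hnn g2 m b m b n2 t2 B3 ltac:(lra) ltac:(lra) P2).
    unfold segd in *. lra. }
  assert (Hf : is_finite (curve_length d g a b)).
  { pose proof (cl_nonneg X d Hnn g a b ltac:(lra)). unfold is_finite. destruct (curve_length d g a b); simpl in *; tauto. }
  assert (Hrect : rectifiable d g a b).
  { split; [lra|split; auto].
    intros t Ht e He.
    destruct (Rlt_le_dec t m) as [Htm|Htm].
    - destruct (A2 t ltac:(lra) e He) as [eta [Heta K]]. exists (Rmin eta (m - t)). split.
      apply Rmin_case; lra. intros s Hs Hst. unfold g. rewrite !ccat_l.
      apply K. split. lra. assert (Rabs (s - t) < m - t) by (eapply Rlt_le_trans; [exact Hst| apply Rmin_r]).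
      apply Rabs_def2 in H. lra. eapply Rlt_le_trans; [exact Hst| apply Rmin_l]. lra.
      assert (Rabs (s - t) < m - t) by (eapply Rlt_le_trans; [exact Hst| apply Rmin_r]). apply Rabs_def2 in H. lra.
    - destruct (Rle_lt_or_eq_dec m t Htm) as [Hmt|Hmt].
      + destruct (B2 t ltac:(lra) e He) as [eta [Heta K]]. exists (Rmin eta (t - m)). split.
        apply Rmin_case; lra. intros s Hs Hst.
        assert (Rabs (s - t) < t - m) by (eapply Rlt_le_trans; [exact Hst| apply Rmin_r]). apply Rabs_def2 in H.
        unfold g. rewrite !ccat_r by (auto; lra).
        apply K. lra. eapply Rlt_le_trans; [exact Hst| apply Rmin_l].
      + subst t. destruct (A2 m ltac:(lra) e He) as [eta1 [Heta1 K1]]. destruct (B2 m ltac:(lra) e He) as [eta2 [Heta2 K2]].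
        exists (Rmin eta1 eta2). split. apply Rmin_case; lra. intros s Hs Hst.
        unfold g. rewrite (ccat_l g1 g2 m m) by lra.
        destruct (Rle_dec s m).
        * rewrite ccat_l by lra. apply K1. lra. eapply Rlt_le_trans; [exact Hst| apply Rmin_l].
        * rewrite ccat_r by (auto; lra). rewrite E. apply K2. lra. eapply Rlt_le_trans; [exact Hst| apply Rmin_r]. }
  split; auto.
  assert (Htsub : forall u v w, a <= u -> u <= v -> v <= w -> w <= b -> term g u w <= term g u v + term g v w).
  { intros u v w H1 H2 H3 H4. unfold term.
    change (minf g u w * real (curve_length d g u w) <= minf g u v * real (curve_length d g u v) + minf g v w * real (curve_length d g v w)).
    pose proof (RL_sub X d Hnn Htri g a b u v w Hf H1 H2 H3 H4). unfold RL in H.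
    destruct (cl_fin X d Hnn g a b u v Hf H1 H2 ltac:(lra)) as [_ [N1 _]].
    destruct (cl_fin X d Hnn g a b v w Hf ltac:(lra) H3 H4) as [_ [N2 _]]. unfold RL in *.
    pose proof (minf_mono g u v u w ltac:(lra) H2 H3). pose proof (minf_mono g v w u w H2 H3 ltac:(lra)).
    pose proof (minf_nn g u w ltac:(lra)).
    set (A := real (curve_length d g u w)) in *. set (B1' := real (curve_length d g u v)) in *.
    set (B2' := real (curve_length d g v w)) in *.
    apply Rle_trans with (minf g u w * (B1' + B2')). apply Rmult_le_compat_l; auto.
    nra. }
  apply LI_le.
  - pose proof (LI_nn g1 a m A3 A1). pose proof (LI_nn g2 m b B3 B1). lra.
  - intros n t Hp.
    destruct (psum_split (term g) a b Htsub n a b t Hp ltac:(lra) ltac:(lra) m ltac:(lra)) as [n1 [t1 [n2 [t2 [P1 [P2 Hs]]]]]].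
    assert (psum (term g) t1 n1 = psum (term g1) t1 n1).
    { apply psum_eqf. intros i Hi. pose proof (partition_range _ _ _ _ P1 i ltac:(lia)).
      pose proof (partition_range _ _ _ _ P1 (S i) ltac:(lia)). apply term_ext. intros w Hw. unfold g. apply ccat_l. lra. }
    assert (psum (term g) t2 n2 = psum (term g2) t2 n2).
    { apply psum_eqf. intros i Hi. pose proof (partition_range _ _ _ _ P2 i ltac:(lia)).
      pose proof (partition_range _ _ _ _ P2 (S i) ltac:(lia)). apply term_ext. intros w Hw. unfold g. apply ccat_r; auto; lra. }
    pose proof (LI_ge g1 a m n1 t1 A3 P1). pose proof (LI_ge g2 m b n2 t2 B3 P2). lra.
Qed.

End LineInt.


Lemma exp_mono x y : x <= y -> exp x <= exp y.
Proof. intros H. destruct (Rle_lt_or_eq_dec x y H). left; apply exp_increasing; auto. subst; lra. Qed.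

Lemma exp_tele_inc eps u v : 0 < eps -> u <= v -> exp (- eps * v) * (v - u) <= (exp (- eps * u) - exp (- eps * v)) / eps.
Proof.
  intros He Huv. pose proof (exp_ineq1_le (eps * (v - u))).
  assert (exp (- eps * u) = exp (- eps * v) * exp (eps * (v - u))) by (rewrite <- exp_plus; f_equal; ring).
  rewrite H0. pose proof (exp_pos (- eps * v)).
  apply Rmult_le_reg_r with eps; auto.
  replace ((exp (- eps * v) * exp (eps * (v - u)) - exp (- eps * v)) / eps * eps) with (exp (- eps * v) * exp (eps * (v - u)) - exp (- eps * v)) by (field; lra).
  nra.
Qed.

Lemma exp_tele_dec eps u v : 0 < eps -> u <= v -> exp (eps * u) * (v - u) <= (exp (eps * v) - exp (eps * u)) / eps.
Proof.
  intros He Huv. pose proof (exp_ineq1_le (eps * (v - u))).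
  assert (exp (eps * v) = exp (eps * u) * exp (eps * (v - u))) by (rewrite <- exp_plus; f_equal; ring).
  rewrite H0. pose proof (exp_pos (eps * u)).
  apply Rmult_le_reg_r with eps; auto.
  replace ((exp (eps * u) * exp (eps * (v - u)) - exp (eps * u)) / eps * eps) with (exp (eps * u) * exp (eps * (v - u)) - exp (eps * u)) by (field; lra).
  nra.
Qed.

Section DEps.
Variable X : Type.
Variable d : X -> X -> R.
Hypothesis Hm : is_metric d.
Variable p : X.
Variable eps : R.
Hypothesis Heps : 0 < eps.
Hypothesis Hgeo : geodesic_space d.

Definition rho := fun z => exp (- eps * d p z).
Lemma rho_nn z : 0 <= rho z. Proof. unfold rho. left; apply exp_pos. Qed.
Lemma rho_le1 z : rho z <= 1. Proof. unfold rho. rewrite <- exp_0. apply exp_mono. pose proof (Hnn X d Hm p z). nra. Qed.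

Notation e := (d_eps d p eps).
Notation LI := (line_integral d rho).

Lemma geo_iso x y s : geodesic_segment d x y s -> iso X d s 0 (d x y).
Proof. intros [_ [_ H]]. intros u v Hu Hv. apply H; auto. Qed.

Lemma geo_rect x y s : geodesic_segment d x y s -> rectifiable d s 0 (d x y).
Proof. intros H. apply (iso_rect X d). apply (geo_iso x y s H). apply (Hnn X d Hm). Qed.

Lemma e_le_LI g a b : rectifiable d g a b -> e (g a) (g b) <= LI g a b.
Proof.
  intros Hr. unfold d_eps. apply real_glb_le. exists g, a, b. auto.
  intros y [g' [a' [b' [Hr' [_ [_ ->]]]]]]. destruct Hr' as [H1 [_ H3]].
  apply (LI_nn X d Hm rho rho_nn rho_le1); auto.
Qed.

Lemma e_ge x y B : (forall g a b, rectifiable d g a b -> g a = x -> g b = y -> B <= LI g a b) -> B <= e x y.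
Proof.
  intros H. destruct (Hgeo x y) as [s Hs]. unfold d_eps. apply real_glb_ge with (x := LI s 0 (d x y)).
  exists s, 0, (d x y). split. apply (geo_rect x y s Hs). destruct Hs as [A [B' _]]. auto.
  intros z [g [a [b [Hr [Ha [Hb ->]]]]]]. apply H; auto.
Qed.

Lemma e_nn x y : 0 <= e x y.
Proof. apply e_ge. intros g a b [H1 [_ H3]] _ _. apply (LI_nn X d Hm rho rho_nn rho_le1); auto. Qed.

Lemma e_approx x y eta : 0 < eta -> exists g a b, rectifiable d g a b /\ g a = x /\ g b = y /\ LI g a b < e x y + eta.
Proof.
  intros He. apply NNPP. intros Hn.
  assert (e x y + eta <= e x y). { apply e_ge. intros g a b Hr Ha Hb. apply Rnot_lt_le. intros Hl. apply Hn. exists g, a, b. auto. }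
  lra.
Qed.

Lemma e_tri x y z : e x z <= e x y + e y z.
Proof.
  apply Rnot_lt_le. intro Hlt. set (eta := (e x z - (e x y + e y z)) / 2).
  assert (Heta : 0 < eta) by (unfold eta; lra).
  destruct (e_approx x y eta Heta) as [g1 [a1 [b1 [R1 [E1 [F1 L1]]]]]].
  destruct (e_approx y z eta Heta) as [g2 [a2 [b2 [R2 [E2 [F2 L2]]]]]].
  set (c := a2 - b1). set (g2' := fun s => g2 (s + c)).
  assert (R2' : rectifiable d g2' b1 (b2 - c)).
  { apply rect_shift. replace (b1 + c) with a2 by (unfold c; ring). replace (b2 - c + c) with b2 by ring. auto. }
  assert (LS : LI g2' b1 (b2 - c) = LI g2 a2 b2).
  { unfold g2'. rewrite LI_shift. replace (b1 + c) with a2 by (unfold c; ring). replace (b2 - c + c) with b2 by ring. auto. }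
  assert (J : g1 b1 = g2' b1). { unfold g2'. replace (b1 + c) with a2 by (unfold c; ring). congruence. }
  destruct (rect_ccat X d Hm rho rho_nn rho_le1 g1 g2' a1 b1 (b2 - c) R1 R2' J) as [R L].
  pose proof (e_le_LI _ _ _ R) as K.
  rewrite ccat_l in K by (destruct R1; lra). rewrite ccat_r in K by (auto; destruct R2'; lra).
  assert (Z : g2' (b2 - c) = z) by (unfold g2'; replace (b2 - c + c) with b2 by ring; auto).
  rewrite Z, E1 in K.
  unfold eta in *. lra.
Qed.

Lemma e_geo_tele x y s (G : R -> R) : geodesic_segment d x y s ->
  (forall u v, 0 <= u -> u <= v -> v <= d x y -> minf X rho s u v * (v - u) <= G v - G u) ->
  e x y <= G (d x y) - G 0.
Proof.
  intros Hs HG. pose proof (geo_rect x y s Hs) as Hr. pose proof (e_le_LI s 0 (d x y) Hr).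
  pose proof (geo_iso x y s Hs) as Hi.
  destruct Hs as [A [B _]]. rewrite A, B in H. eapply Rle_trans. apply H.
  apply (LI_iso_tele X d rho rho_nn); auto. apply (Hnn X d Hm).
Qed.

Lemma e_le_d x y : e x y <= d x y.
Proof.
  destruct (Hgeo x y) as [s Hs]. assert (K := e_geo_tele x y s (fun t => t) Hs). simpl in K.
  replace (d x y) with (d x y - 0) by ring. apply K.
  intros u v H1 H2 H3. pose proof (minf_le1 X rho rho_nn rho_le1 s u v H2). pose proof (minf_nn X rho rho_nn s u v H2). nra.
Qed.

Lemma e_refl x : e x x = 0.
Proof. pose proof (e_le_d x x). rewrite (Hrefl X d Hm) in H. pose proof (e_nn x x). lra. Qed.

Lemma e_le_M x y s M : geodesic_segment d x y s -> 0 <= M -> (forall w, 0 <= w <= d x y -> rho (s w) <= M) -> e x y <= M * d x y.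
Proof.
  intros Hs HM H. assert (K := e_geo_tele x y s (fun t => M * t) Hs). simpl in K.
  replace (M * d x y) with (M * d x y - M * 0) by ring. apply K. intros u v H1 H2 H3. pose proof (minf_le X rho rho_nn s u v v ltac:(lra)).
  pose proof (H v ltac:(lra)). pose proof (minf_nn X rho rho_nn s u v H2). nra.
Qed.

Lemma e_out g a b : iso X d g a b -> 0 <= a -> a <= b -> (forall w, a <= w <= b -> w <= d p (g w)) ->
  e (g a) (g b) <= exp (- eps * a) / eps.
Proof.
  intros Hi Ha Hab Hw. eapply Rle_trans. apply e_le_LI. apply (iso_rect X d); auto.
  eapply Rle_trans. apply (LI_iso_tele X d rho rho_nn g a b (fun t => - exp (- eps * t) / eps)); auto.
  - intros u v H1 H2 H3. pose proof (minf_le X rho rho_nn g u v v ltac:(lra)).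
    assert (rho (g v) <= exp (- eps * v)) by (unfold rho; apply exp_mono; pose proof (Hw v ltac:(lra)); nra).
    pose proof (minf_nn X rho rho_nn g u v H2). pose proof (exp_tele_inc eps u v Heps H2).
    apply Rle_trans with (exp (- eps * v) * (v - u)). nra. unfold Rdiv in *. lra.
  - pose proof (exp_pos (- eps * b)). pose proof (Rinv_0_lt_compat eps Heps). unfold Rdiv. nra.
Qed.

Lemma e_in g a b : iso X d g a b -> 0 <= a -> a <= b -> (forall w, a <= w <= b -> w <= d p (g w)) ->
  e (g b) (g a) <= exp (- eps * a) / eps.
Proof.
  intros Hi Ha Hab Hw. set (h := fun t => g (- t)).
  assert (Hih : iso X d h (- b) (- a)).
  { intros s t Hs Ht. unfold h. rewrite Hi by lra. rewrite <- Rabs_Ropp. f_equal. ring. }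
  pose proof (e_le_LI h (- b) (- a) (iso_rect X d h _ _ Hih ltac:(lra))) as K.
  unfold h in K. rewrite !Ropp_involutive in K. eapply Rle_trans. apply K.
  eapply Rle_trans. apply (LI_iso_tele X d rho rho_nn h (- b) (- a) (fun t => exp (eps * t) / eps)); auto. lra.
  - intros u v H1 H2 H3. pose proof (minf_le X rho rho_nn h u v u ltac:(lra)).
    assert (rho (h u) <= exp (eps * u)) by (unfold rho, h; apply exp_mono; pose proof (Hw (- u) ltac:(lra)); nra).
    pose proof (minf_nn X rho rho_nn h u v H2). pose proof (exp_tele_dec eps u v Heps H2).
    apply Rle_trans with (exp (eps * u) * (v - u)). nra. unfold Rdiv in *. lra.
  - pose proof (exp_pos (eps * - b)). pose proof (Rinv_0_lt_compat eps Heps). unfold Rdiv.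
    replace (eps * - a) with (- eps * a) by ring. nra.
Qed.


Definition two_pt (a m b : R) : nat -> R := fun i => match i with O => a | 1%nat => m | _ => b end.
Lemma partition_two a m b : a <= m -> m <= b -> partition a b 2 (two_pt a m b).
Proof. intros. split; [auto|split;[auto|]]. intros i Hi. destruct i as [|[|]]; simpl; lra || lia. Qed.

Lemma LI_lower g a b r : rectifiable d g a b -> r + 1 <= d p (g a) -> d p (g b) <= r ->
  exp (- eps * (r + 1)) <= LI g a b.
Proof.
  intros Hr Ha Hb. destruct Hr as [Hab [Hc Hf]].
  set (f := fun t => d p (g t)).
  assert (Hfc : forall t, a <= t <= b -> forall e0, 0 < e0 -> exists eta, 0 < eta /\
            forall s, a <= s <= b -> Rabs (s - t) < eta -> Rabs (f s - f t) < e0).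
  { intros t Ht e0 He0. destruct (Hc t Ht e0 He0) as [eta [Heta K]]. exists eta. split; auto.
    intros s Hs Hst. specialize (K s Hs Hst). unfold f. apply Rabs_def1.
    pose proof (Htri X d Hm p (g t) (g s)). rewrite (Hsym X d Hm (g t) (g s)) in H. lra.
    pose proof (Htri X d Hm p (g s) (g t)). lra. }
  set (S := fun t => a <= t <= b /\ r + 1 <= f t).
  assert (Sb : bound S). { exists b. intros t [Ht _]. lra. }
  assert (Sa : exists t, S t). { exists a. split. lra. auto. }
  destruct (completeness S Sb Sa) as [ts [Hub Hlub]].
  assert (Hts : a <= ts <= b). { split. apply Hub. split; [lra|auto]. apply Hlub. intros t [Ht _]. lra. }
  assert (C1 : r + 1 <= f ts).
  { apply Rnot_lt_le. intros Hlt. destruct (Hfc ts Hts (r + 1 - f ts) ltac:(lra)) as [eta [Heta K]].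
    assert (ts <= ts - eta). { apply Hlub. intros t [Ht Hft]. pose proof (Hub t (conj Ht Hft)).
      apply Rnot_lt_le. intros Hl. specialize (K t Ht). assert (Rabs (t - ts) < eta) by (apply Rabs_def1; lra).
      specialize (K H0). apply Rabs_def2 in K. lra. }
    lra. }
  assert (C2 : forall w, ts <= w <= b -> f w <= r + 1).
  { intros w Hw. destruct (Rle_lt_or_eq_dec ts w (proj1 Hw)) as [Hlt|Heq].
    - apply Rnot_lt_le. intros Hl. assert (w <= ts) by (apply Hub; split; [lra|lra]). lra.
    - subst w. apply Rnot_lt_le. intros Hl.
      assert (Htb : ts < b). { destruct (Rle_lt_or_eq_dec ts b (proj2 Hts)); auto. subst ts. unfold f in Hl. lra. }
      destruct (Hfc ts Hts (f ts - (r + 1)) ltac:(lra)) as [eta [Heta K]].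
      set (w := Rmin (ts + eta / 2) b).
      assert (Hw1 : ts < w) by (unfold w; apply Rmin_case; lra).
      assert (Hw2 : w <= ts + eta / 2) by (unfold w; apply Rmin_l).
      assert (Hw3 : w <= b) by (unfold w; apply Rmin_r).
      specialize (K w ltac:(lra)). assert (Rabs (w - ts) < eta) by (apply Rabs_def1; lra).
      specialize (K H). apply Rabs_def2 in K.
      assert (w <= ts) by (apply Hub; split; [lra|lra]). lra. }
  pose proof (LI_ge X d Hm rho rho_nn rho_le1 g a b 2 (two_pt a ts b) Hf (partition_two a ts b ltac:(lra) ltac:(lra))) as K.
  simpl in K.
  pose proof (term_nn X d Hm rho rho_nn g a b a ts Hf ltac:(lra) ltac:(lra) ltac:(lra)).
  assert (exp (- eps * (r + 1)) <= term X d rho g ts b).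
  { unfold term. change (exp (- eps * (r + 1)) <= minf X rho g ts b * real (curve_length d g ts b)).
    destruct (cl_fin X d (Hnn X d Hm) g a b ts b Hf ltac:(lra) ltac:(lra) ltac:(lra)) as [_ [_ [_ Hd]]].
    unfold RL in Hd.
    assert (1 <= d (g ts) (g b)). { pose proof (Htri X d Hm p (g b) (g ts)). rewrite (Hsym X d Hm (g b) (g ts)) in H0. unfold f in C1. lra. }
    assert (exp (- eps * (r + 1)) <= minf X rho g ts b).
    { apply minf_ge. lra. intros w Hw. unfold rho. apply exp_mono. pose proof (C2 w Hw). unfold f in H1. nra. }
    pose proof (exp_pos (- eps * (r + 1))). nra. }
  lra.
Qed.

Lemma e_lower x y r : r + 1 <= d p x -> d p y <= r -> exp (- eps * (r + 1)) <= e x y.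
Proof.
  intros Hx Hy. apply e_ge. intros g a b Hr Ha Hb. apply LI_lower; auto; congruence.
Qed.

End DEps.


Lemma nat_unbounded x : exists N : nat, x < INR N.
Proof.
  destruct (archimed x) as [H1 _]. destruct (Z_le_gt_dec 0 (up x)) as [Hz|Hz].
  - exists (Z.to_nat (up x)). rewrite INR_IZR_INZ. rewrite Z2Nat.id by lia. auto.
  - exists 0%nat. simpl. apply Z.gt_lt in Hz. apply IZR_lt in Hz. lra.
Qed.

Lemma exp_small eps K r : 0 < eps -> 0 < r -> exists N : nat, forall n, (N <= n)%nat -> K * exp (- eps * INR n) < r.
Proof.
  intros He Hr. destruct (nat_unbounded (Rabs K / (r * eps))) as [N HN]. exists N. intros n Hn.
  apply le_INR in Hn. pose proof (pos_INR N).
  pose proof (exp_ineq1_le (eps * INR n)). pose proof (exp_pos (eps * INR n)).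
  assert (E : exp (- eps * INR n) = / exp (eps * INR n)) by (rewrite <- exp_Ropp; f_equal; ring).
  rewrite E. apply Rle_lt_trans with (Rabs K * / exp (eps * INR n)).
  apply Rmult_le_compat_r. left. apply Rinv_0_lt_compat; auto. apply Rle_abs.
  apply Rmult_lt_reg_r with (exp (eps * INR n)); auto. rewrite Rmult_assoc, Rinv_l by lra. rewrite Rmult_1_r.
  assert (Rabs K / (r * eps) * (r * eps) = Rabs K) by (field; lra).
  assert (Rabs K < r * eps * INR n + r * eps * 0 + r) .
  { assert (Rabs K < r * eps * INR n \/ Rabs K <= r * eps * INR n).
    { left. rewrite <- H2. assert (0 < r * eps) by nra. nra. }
    destruct H3; lra. }
  nra.
Qed.

Section Main.
Variable X : Type.
Variable d : X -> X -> R.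
Variable delta : R.
Variable p : X.
Variable eps : R.
Hypothesis Hhyp : gromov_hyperbolic d delta.
Hypothesis Heps : 0 < eps.

Lemma Hm : is_metric d. Proof. apply Hhyp. Qed.
Lemma Hgeo : geodesic_space d. Proof. apply Hhyp. Qed.
Lemma Hgrom : forall x y z p, gromov_prod d p x z >= Rmin (gromov_prod d p x y) (gromov_prod d p y z) - delta.
Proof. apply Hhyp. Qed.
Lemma delta_nn : 0 <= delta.
Proof. pose proof (Hgrom p p p p). unfold gromov_prod in H. rewrite Rmin_left in H by lra. lra. Qed.

Notation e := (d_eps d p eps).

Lemma dsym x y : d x y = d y x. Proof. apply (Hsym X d Hm). Qed.
Lemma dnn x y : 0 <= d x y. Proof. apply (Hnn X d Hm). Qed.
Lemma dtri x y z : d x z <= d x y + d y z. Proof. apply (Htri X d Hm). Qed.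

Lemma ray_iso g a b : geodesic_ray d p g -> 0 <= a -> iso X d g a b.
Proof. intros [_ H] Ha s t Hs Ht. apply H; lra. Qed.

Lemma ray_dist g w : geodesic_ray d p g -> 0 <= w -> d p (g w) = w.
Proof. intros [H0 H] Hw. rewrite <- H0 at 1. rewrite H by lra. rewrite Rabs_left1 by lra. ring. Qed.

Lemma ray_e_bound g (a b : nat) : geodesic_ray d p g -> e (g (INR a)) (g (INR b)) <= exp (- eps * INR (min a b)) / eps.
Proof.
  intros Hg. destruct (Nat.le_ge_cases a b) as [Hab|Hab].
  - rewrite Nat.min_l by auto. apply (e_out X d Hm p eps Heps); auto. apply ray_iso; auto. apply pos_INR.
    apply pos_INR. apply le_INR; auto. intros w Hw. rewrite ray_dist; auto. lra. pose proof (pos_INR a). lra.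
  - rewrite Nat.min_r by auto. apply (e_in X d Hm p eps Heps); auto. apply ray_iso; auto. apply pos_INR.
    apply pos_INR. apply le_INR; auto. intros w Hw. rewrite ray_dist; auto. lra. pose proof (pos_INR b). lra.
Qed.

Lemma ray_cauchy g : geodesic_ray d p g -> forall r, 0 < r -> exists N, forall a b : nat, (N <= a)%nat -> (N <= b)%nat -> e (g (INR a)) (g (INR b)) < r.
Proof.
  intros Hg r Hr. destruct (exp_small eps (/ eps) r Heps Hr) as [N HN]. exists N. intros a b Ha Hb.
  eapply Rle_lt_trans. apply ray_e_bound; auto. specialize (HN (min a b) ltac:(lia)). unfold Rdiv. lra.
Qed.

Lemma ray_nolimit g : geodesic_ray d p g -> forall x, exists r, 0 < r /\ exists K, forall a : nat, (K <= a)%nat -> r <= e (g (INR a)) x.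
Proof.
  intros Hg x. exists (exp (- eps * (d p x + 1))). split. apply exp_pos.
  destruct (nat_unbounded (d p x + 1)) as [K HK]. exists K. intros a Ha.
  apply (e_lower X d Hm p eps Heps Hgeo). rewrite ray_dist; auto. apply le_INR in Ha. lra. apply pos_INR. lra.
Qed.

Lemma part1 g : geodesic_ray d p g -> boundary_seq e (ray_seq g).
Proof.
  intros Hg. split.
  - intros r Hr. destruct (ray_cauchy g Hg r Hr) as [N HN]. exists N. intros n m Hn Hm'. apply HN; auto.
  - intros [x Hx]. destruct (ray_nolimit g Hg x) as [r [Hr [K HK]]]. destruct (Hx r Hr) as [N HN].
    specialize (HN (max N K) ltac:(lia)). specialize (HK (max N K) ltac:(lia)). unfold ray_seq in HN. lra.
Qed.

Lemma part2 g g' : geodesic_ray d p g -> geodesic_ray d p g' -> ray_equiv d g g' -> seq_equiv e (ray_seq g) (ray_seq g').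
Proof.
  intros Hg Hg' [C HC] r Hr.
  assert (HC0 : 0 <= C) by (pose proof (HC 0 ltac:(lra)); pose proof (dnn (g 0) (g' 0)); lra).
  destruct (exp_small eps (exp (eps * C) * C) r Heps Hr) as [N HN]. exists N. intros n Hn. unfold ray_seq.
  destruct (Hgeo (g (INR n)) (g' (INR n))) as [s Hs].
  pose proof (HC (INR n) (pos_INR n)) as HD.
  eapply Rle_lt_trans.
  apply (e_le_M X d Hm p eps Heps _ _ s (exp (eps * C) * exp (- eps * INR n)) Hs).
  left. apply Rmult_lt_0_compat; apply exp_pos.
  - intros w Hw. unfold rho. rewrite <- exp_plus. apply exp_mono.
    pose proof (geo_iso X d _ _ s Hs) as Hi. destruct Hs as [S0 _].
    pose proof (dtri p (s w) (s 0)). rewrite Hi in H by lra. rewrite S0 in H. rewrite ray_dist in H by (auto; apply pos_INR).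
    rewrite Rabs_right in H by lra. nra.
  - specialize (HN n Hn). pose proof (exp_pos (eps * C)). pose proof (exp_pos (- eps * INR n)).
    apply Rle_lt_trans with (exp (eps * C) * exp (- eps * INR n) * C). apply Rmult_le_compat_l; [nra|auto]. nra.
Qed.


Lemma gp_mid x y s : geodesic_segment d x y s ->
  let u := (d x p + d x y - d p y) / 2 in
  0 <= u <= d x y /\ d p (s u) <= gromov_prod d p x y + 2 * delta.
Proof.
  intros Hs u. pose proof (geo_iso X d x y s Hs) as Hi. destruct Hs as [S0 [SD _]].
  assert (Hu : 0 <= u <= d x y).
  { unfold u. pose proof (dtri p x y). pose proof (dtri x y p). rewrite (dsym p x) in H. rewrite (dsym y p) in H0. lra. }
  split; auto.
  pose proof (Hgrom p y (s u) x) as G. unfold gromov_prod in *.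
  assert (E1 : d x (s u) = u). { rewrite <- S0 at 1. rewrite Hi by lra. rewrite Rabs_left1 by lra. ring. }
  assert (E2 : d y (s u) = d x y - u). { rewrite <- SD at 1. rewrite Hi by lra. rewrite Rabs_right by lra. ring. }
  rewrite E1, E2 in G.
  replace ((d x y + u - (d x y - u)) / 2) with u in G by lra.
  replace ((d x p + d x y - d p y) / 2) with u in G by (unfold u; lra).
  rewrite Rmin_left in G by lra. rewrite (dsym p x). unfold u in *. lra.
Qed.

Lemma div2_ge N j : (2 * N <= j)%nat -> (N <= Nat.div2 j)%nat.
Proof.
  intros H. destruct (Nat.Even_or_Odd j) as [[k Hk]|[k Hk]]; subst j.
  rewrite Nat.div2_double. lia. replace (2 * k + 1)%nat with (S (2 * k)) by lia. rewrite Nat.div2_succ_double. lia.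
Qed.

Definition xs_int (g g' : R -> X) (j : nat) : X := if Nat.even j then g' (INR (Nat.div2 j)) else g (INR (Nat.div2 j)).

Lemma xs_even g g' k : xs_int g g' (2 * k) = g' (INR k).
Proof. unfold xs_int. rewrite Nat.div2_double. rewrite Nat.even_mul. reflexivity. Qed.
Lemma xs_odd g g' k : xs_int g g' (S (2 * k)) = g (INR k).
Proof. unfold xs_int. rewrite Nat.div2_succ_double. rewrite Nat.even_succ, Nat.odd_mul. reflexivity. Qed.

Lemma part3 g g' : GH_property d p eps -> geodesic_ray d p g -> geodesic_ray d p g' ->
  seq_equiv e (ray_seq g) (ray_seq g') -> ray_equiv d g g'.
Proof.
  intros HGH Hg Hg' Heq.
  set (ys := fun j => g' (INR (Nat.div2 j))).
  assert (Hys : boundary_seq e ys).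
  { split.
    - intros r Hr. destruct (ray_cauchy g' Hg' r Hr) as [N HN]. exists (2 * N)%nat. intros n m Hn Hm'.
      apply HN; apply div2_ge; auto.
    - intros [x Hx]. destruct (ray_nolimit g' Hg' x) as [r [Hr [K HK]]]. destruct (Hx r Hr) as [N HN].
      specialize (HN (max N (2 * K)) ltac:(lia)). specialize (HK (Nat.div2 (max N (2 * K))) (div2_ge K (max N (2 * K)) ltac:(lia))).
      unfold ys in HN. lra. }
  assert (Hxs : seq_equiv e (xs_int g g') ys).
  { intros r Hr. destruct (Heq r Hr) as [N HN]. exists (2 * N)%nat. intros j Hj.
    destruct (Nat.Even_or_Odd j) as [[k Hk]|[k Hk]]; subst j.
    - rewrite xs_even. unfold ys. rewrite Nat.div2_double. rewrite (e_refl X d Hm p eps Heps Hgeo). auto.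
    - replace (2 * k + 1)%nat with (S (2 * k)) by lia. rewrite xs_odd. unfold ys. rewrite Nat.div2_succ_double.
      apply HN. lia. }
  destruct (HGH ys Hys (xs_int g g') Hxs) as [C [HC1 HC]].
  exists (4 * delta). intros t Ht. pose proof delta_nn as Hd.
  set (r := t + 2 * delta).
  assert (Hr' : 0 < exp (- eps * (r + 1)) / C) by (apply Rdiv_lt_0_compat; [apply exp_pos|lra]).
  destruct (Heq _ Hr') as [N HN].
  destruct (nat_unbounded (r + 1)) as [k0 Hk0].
  set (k := max N k0).
  assert (Hk : r + 1 <= INR k) by (pose proof (le_INR k0 k ltac:(unfold k; lia)); lra).
  specialize (HN k ltac:(unfold k; lia)). unfold ray_seq in HN.
  set (x := g (INR k)). set (y := g' (INR k)). fold x y in HN.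
  assert (Hdx : d p x = INR k) by (apply ray_dist; auto; apply pos_INR).
  assert (Hdy : d p y = INR k) by (apply ray_dist; auto; apply pos_INR).
  assert (A : t <= gromov_prod d p x y).
  { apply Rnot_lt_le. intros Hlt. destruct (Hgeo x y) as [s Hs].
    specialize (HC (S (2 * k)) (2 * k)%nat s). rewrite xs_odd, xs_even in HC. fold x y in HC. specialize (HC Hs).
    destruct (gp_mid x y s Hs) as [Hu Hz]. set (u := (d x p + d x y - d p y) / 2) in *.
    pose proof (e_lower X d Hm p eps Heps Hgeo x (s u) r ltac:(lra) ltac:(unfold r; lra)) as L.
    pose proof (cl_ps X e s 0 (d x y) 2 (two_pt 0 u (d x y)) (partition_two 0 u (d x y) ltac:(lra) ltac:(lra))) as P.
    pose proof (Rbar_le_trans _ _ _ P HC) as Q. simpl in Q. unfold segd in Q.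
    destruct Hs as [S0 _]. rewrite S0 in Q.
    pose proof (e_nn X d Hm p eps Heps Hgeo (s u) (s (d x y))).
    assert (C * e x y < exp (- eps * (r + 1))).
    { apply Rmult_lt_compat_l with (r := C) in HN; [|lra]. replace (C * (exp (- eps * (r + 1)) / C)) with (exp (- eps * (r + 1))) in HN by (field; lra). auto. }
    lra. }
  assert (Htk : t <= INR k) by (unfold r in Hk; lra).
  assert (Gt1 : gromov_prod d p (g t) x = t).
  { unfold gromov_prod, x. rewrite !ray_dist by (auto; apply pos_INR || lra). destruct Hg as [_ Hg2].
    rewrite Hg2 by (auto; apply pos_INR || lra). rewrite Rabs_left1 by lra. lra. }
  assert (Gt2 : gromov_prod d p y (g' t) = t).
  { unfold gromov_prod, y. rewrite !ray_dist by (auto; apply pos_INR || lra). destruct Hg' as [_ Hg2].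
    rewrite Hg2 by (auto; apply pos_INR || lra). rewrite Rabs_right by lra. lra. }
  pose proof (Hgrom x y (g' t) p) as G1. rewrite Gt2 in G1.
  pose proof (Hgrom (g t) x (g' t) p) as G2. rewrite Gt1 in G2.
  assert (gromov_prod d p x (g' t) >= t - delta) by (apply Rle_ge; apply Rge_le in G1; revert G1; apply Rmin_case_strong; intros; lra).
  assert (gromov_prod d p (g t) (g' t) >= t - 2 * delta) by (apply Rle_ge; apply Rge_le in G2; revert G2; apply Rmin_case_strong; intros; lra).
  unfold gromov_prod in H0. rewrite !ray_dist in H0 by auto. lra.
Qed.

End Main.


Section Compact.
Variable X : Type.
Variable d : X -> X -> R.
Hypothesis Hm : is_metric d.
Hypothesis Hprop : proper_space d.
Variable p : X.

Lemma list_max {A : Type} (f : A -> nat) (l : list A) : exists M, forall c, In c l -> (f c <= M)%nat.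
Proof.
  induction l as [|a l [M HM]]. exists 0%nat. intros c []. exists (max (f a) M). intros c [<-|Hc]. lia.
  specialize (HM c Hc). lia.
Qed.

Lemma cluster (y : nat -> X) Rb : (forall N, exists n, (N <= n)%nat /\ d p (y n) <= Rb) ->
  exists c, forall eta, 0 < eta -> forall N, exists n, (N <= n)%nat /\ d c (y n) < eta.
Proof.
  intros Hio. apply NNPP. intros Hn.
  assert (Hc : forall c, exists pr : R * nat, 0 < fst pr /\ forall n, (snd pr <= n)%nat -> fst pr <= d c (y n)).
  { intros c. apply NNPP. intros Hc. apply Hn. exists c. intros eta Heta N. apply NNPP. intros H2.
    apply Hc. exists (eta, N). simpl. split; auto. intros n Hn'. apply Rnot_lt_le. intros Hl. apply H2. exists n. auto. }
  set (F := fun c => proj1_sig (constructive_indefinite_description _ (Hc c))).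
  assert (HF : forall c, 0 < fst (F c) /\ forall n, (snd (F c) <= n)%nat -> fst (F c) <= d c (y n)).
  { intros c. unfold F. destruct (constructive_indefinite_description _ (Hc c)) as [pr Hpr]. simpl. auto. }
  destruct (Hprop p Rb X (fun c z => d c z < fst (F c))) as [l Hl].
  - intros c z Hz. exists (fst (F c) - d c z). split. lra. intros w Hw. pose proof (Htri X d Hm c z w). lra.
  - intros c _. exists c. rewrite (Hrefl X d Hm). apply HF.
  - destruct (list_max (fun c => snd (F c)) l) as [M HM].
    destruct (Hio M) as [n [Hn1 Hn2]]. destruct (Hl (y n) Hn2) as [c [Hcl Hcy]].
    pose proof (HF c) as [_ K]. specialize (K n ltac:(specialize (HM c Hcl); simpl in HM; lia)). lra.
Qed.

Lemma complete (y : nat -> X) Rb : (forall n, d p (y n) <= Rb) ->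
  (forall eta, 0 < eta -> exists N, forall n m, (N <= n)%nat -> (N <= m)%nat -> d (y n) (y m) < eta) ->
  exists c, forall eta, 0 < eta -> exists N, forall n, (N <= n)%nat -> d (y n) c < eta.
Proof.
  intros Hb Hc. destruct (cluster y Rb) as [c Hcl]. intros N. exists N. split; auto.
  exists c. intros eta Heta. destruct (Hc (eta / 2) ltac:(lra)) as [N HN]. exists N. intros n Hn.
  destruct (Hcl (eta / 2) ltac:(lra) N) as [m [Hm1 Hm2]]. specialize (HN n m Hn Hm1).
  pose proof (Htri X d Hm (y n) (y m) c). rewrite (Hsym X d Hm (y m) c) in H. lra.
Qed.

Definition strict (phi : nat -> nat) := forall j, (phi j < phi (S j))%nat.

Lemma strict_ge phi : strict phi -> forall j, (j <= phi j)%nat.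
Proof. intros H j. induction j. lia. specialize (H j). lia. Qed.

Lemma strict_mono phi : strict phi -> forall i j, (i <= j)%nat -> (phi i <= phi j)%nat.
Proof. intros H i j Hij. induction Hij. lia. specialize (H m). lia. Qed.

Lemma strict_lt phi : strict phi -> forall i j, (i < j)%nat -> (phi i < phi j)%nat.
Proof. intros H i j Hij. pose proof (strict_mono phi H (S i) j Hij). specialize (H i). lia. Qed.

Definition conv_sub (y : nat -> X) (phi : nat -> nat) :=
  strict phi /\ exists c, forall eta, 0 < eta -> exists J, forall j, (J <= j)%nat -> d (y (phi j)) c < eta.

Lemma inv_small eta : 0 < eta -> exists J : nat, forall j, (J <= j)%nat -> / (INR j + 1) < eta.
Proof.
  intros He. destruct (nat_unbounded (/ eta)) as [J HJ]. exists J. intros j Hj. apply le_INR in Hj.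
  pose proof (pos_INR J). pose proof (Rinv_0_lt_compat eta He).
  apply Rle_lt_trans with (/ (INR J + 1)). apply Rinv_le_contravar. lra. lra.
  replace eta with (/ / eta) by (apply Rinv_inv). apply Rinv_lt_contravar. nra. lra.
Qed.

Lemma extract (y : nat -> X) Rb : (forall n, d p (y n) <= Rb) -> exists phi, conv_sub y phi.
Proof.
  intros Hb. destruct (cluster y Rb) as [c Hcl]. intros N. exists N. split; auto.
  assert (Hh : forall k N, {n | (N <= n)%nat /\ d c (y n) < / (INR k + 1)}).
  { intros k N. apply constructive_indefinite_description. apply Hcl. pose proof (pos_INR k).
    apply Rinv_0_lt_compat. lra. }
  set (h := fun k N => proj1_sig (Hh k N)).
  assert (Hhp : forall k N, (N <= h k N)%nat /\ d c (y (h k N)) < / (INR k + 1)).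
  { intros k N. unfold h. destruct (Hh k N). simpl. auto. }
  set (phi := fix phi j := match j with O => h O O | S j' => h (S j') (S (phi j')) end).
  exists phi. split.
  - intros j. simpl. pose proof (Hhp (S j) (S (phi j))). lia.
  - exists c. intros eta Heta. destruct (inv_small eta Heta) as [J HJ]. exists J. intros j Hj.
    rewrite (Hsym X d Hm). specialize (HJ j Hj).
    assert (d c (y (phi j)) < / (INR j + 1)). { destruct j. simpl. apply Hhp. simpl. apply Hhp. }
    lra.
Qed.


Definition Ext (y : nat -> X) : nat -> nat := epsilon (inhabits (fun n : nat => n)) (conv_sub y).

Lemma Ext_spec y Rb : (forall n, d p (y n) <= Rb) -> conv_sub y (Ext y).
Proof. intros Hb. unfold Ext. apply epsilon_spec. apply (extract y Rb Hb). Qed.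

Section Diag.
Variable F : nat -> nat -> X.
Variable B : nat -> R.
Hypothesis HB : forall k n, d p (F k n) <= B k.

Fixpoint Psi (k : nat) : nat -> nat :=
  match k with
  | O => Ext (F O)
  | S k' => fun j => Psi k' (Ext (fun i => F (S k') (Psi k' i)) j)
  end.

Lemma Psi_spec k : conv_sub (F k) (Psi k).
Proof.
  induction k.
  - simpl. apply (Ext_spec (F 0%nat) (B 0%nat)). intros; apply HB.
  - destruct IHk as [Hs _]. pose proof (Ext_spec (fun i => F (S k) (Psi k i)) (B (S k)) (fun n => HB (S k) (Psi k n))) as [Hs2 [c Hc]].
    split.
    + intros j. simpl. apply strict_lt; auto.
    + exists c. intros eta Heta. destruct (Hc eta Heta) as [J HJ]. exists J. intros j Hj. simpl. apply HJ; auto.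
Qed.


Lemma Psi_sub k m : (k <= m)%nat -> forall j, exists i, (j <= i)%nat /\ Psi m j = Psi k i.
Proof.
  intros H. induction H; intros j.
  - exists j. split; auto.
  - simpl. set (phi := Ext (fun i => F (S m) (Psi m i))).
    pose proof (Ext_spec (fun i => F (S m) (Psi m i)) (B (S m)) (fun n => HB (S m) (Psi m n))) as [Hs _].
    fold phi in Hs. destruct (IHle (phi j)) as [i [Hi E]]. exists i. split; auto.
    pose proof (strict_ge phi Hs j). lia.
Qed.

Definition diag j := Psi j j.

Lemma diag_strict : strict diag.
Proof.
  intros j. unfold diag. simpl. set (phi := Ext (fun i => F (S j) (Psi j i))).
  pose proof (Ext_spec (fun i => F (S j) (Psi j i)) (B (S j)) (fun n => HB (S j) (Psi j n))) as [Hs _].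
  fold phi in Hs. destruct (Psi_spec j) as [Hs2 _]. apply strict_lt; auto.
  pose proof (strict_ge phi Hs (S j)). lia.
Qed.

Lemma diag_conv k : exists c, forall eta, 0 < eta -> exists J, forall j, (J <= j)%nat -> d (F k (diag j)) c < eta.
Proof.
  destruct (Psi_spec k) as [_ [c Hc]]. exists c. intros eta Heta. destruct (Hc eta Heta) as [J HJ].
  exists (max J k). intros j Hj. unfold diag. destruct (Psi_sub k j ltac:(lia) j) as [i [Hi E]]. rewrite E.
  apply HJ. lia.
Qed.

End Diag.
End Compact.


Definition qd (k : nat) : R := INR (fst (Cantor.of_nat k)) / INR (S (snd (Cantor.of_nat k))).

Lemma qd_nn k : 0 <= qd k.
Proof. unfold qd. apply Rmult_le_pos. apply pos_INR. left. apply Rinv_0_lt_compat. rewrite S_INR. pose proof (pos_INR (snd (of_nat k))). lra. Qed.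

Lemma qd_dense t eta : 0 <= t -> 0 < eta -> exists k, Rabs (qd k - t) < eta.
Proof.
  intros Ht He. destruct (nat_unbounded (/ eta)) as [m Hm]. pose proof (pos_INR m).
  set (x := t * (INR m + 1)). assert (Hx : 0 <= x) by (unfold x; nra).
  destruct (archimed x) as [A1 A2].
  assert (Hup : (1 <= up x)%Z). { assert (0 < IZR (up x)) by lra. apply lt_IZR in H0. lia. }
  set (i := Z.to_nat (up x - 1)).
  assert (Hi : INR i = IZR (up x) - 1). { unfold i. rewrite INR_IZR_INZ. rewrite Z2Nat.id by lia. rewrite minus_IZR. auto. }
  exists (Cantor.to_nat (i, m)). unfold qd. rewrite cancel_of_to. simpl fst. simpl snd. rewrite S_INR.
  rewrite Hi. set (M := INR m + 1). assert (HM : 0 < M) by (unfold M; lra).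
  set (qq := (IZR (up x) - 1) / M). assert (Hq : qq * M = IZR (up x) - 1) by (unfold qq; field; lra).
  assert (Hinv : / M < eta).
  { replace eta with (/ / eta) by (apply Rinv_inv). apply Rinv_lt_contravar.
    pose proof (Rinv_0_lt_compat eta He). unfold M; nra. unfold M; lra. }
  assert (HMi : M * / M = 1) by (field; lra).
  assert (Ex : x = t * M) by (unfold x, M; ring).
  apply Rabs_def1.
  - assert (E : (qq - t) * M = qq * M - t * M) by ring.
    assert (qq - t <= 0). { apply Rnot_lt_le. intros Hc. assert (0 < (qq - t) * M) by nra. lra. }
    lra.
  - assert (E : (qq - t + / M) * M = qq * M - t * M + M * / M) by ring.
    assert (P : 0 < (qq - t + / M) * M) by lra.
    assert (0 < qq - t + / M). { apply Rnot_le_lt. intros Hc. assert ((qq - t + / M) * M <= 0) by nra. lra. }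
    lra.
Qed.

Lemma eq_of_close a b : (forall eta, 0 < eta -> Rabs (a - b) < eta) -> a = b.
Proof.
  intros H. destruct (Req_dec a b) as [E|E]; auto. exfalso. assert (0 < Rabs (a - b)) by (apply Rabs_pos_lt; lra).
  specialize (H (Rabs (a - b)) H0). lra.
Qed.

Section Surj.
Variable X : Type.
Variable d : X -> X -> R.
Variable delta : R.
Variable p : X.
Variable eps : R.
Hypothesis Hhyp : gromov_hyperbolic d delta.
Hypothesis Heps : 0 < eps.

Lemma Mm : is_metric d. Proof. exact (Hm X d delta Hhyp). Qed.
Lemma Gg : geodesic_space d. Proof. exact (Hgeo X d delta Hhyp). Qed.
Lemma Pp : proper_space d. Proof. apply Hhyp. Qed.
Lemma sy x y : d x y = d y x. Proof. exact (dsym X d delta Hhyp x y). Qed.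
Lemma tr x y z : d x z <= d x y + d y z. Proof. exact (dtri X d delta Hhyp x y z). Qed.
Lemma nn x y : 0 <= d x y. Proof. exact (dnn X d delta Hhyp x y). Qed.

Notation e := (d_eps d p eps).
Lemma etr x y z : e x z <= e x y + e y z. Proof. exact (e_tri X d Mm p eps Heps Gg x y z). Qed.
Lemma ed x y : e x y <= d x y. Proof. exact (e_le_d X d Mm p eps Heps Gg x y). Qed.

Variable xs : nat -> X.
Hypothesis Hxs : boundary_seq e xs.

Lemma far : forall Rb, exists N, forall n, (N <= n)%nat -> Rb < d p (xs n).
Proof.
  intros Rb. apply NNPP. intros Hn.
  assert (Hio : forall N, exists n, (N <= n)%nat /\ d p (xs n) <= Rb).
  { intros N. apply NNPP. intros H2. apply Hn. exists N. intros n Hn'. apply Rnot_le_lt. intros H3. apply H2. exists n. auto. }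
  destruct (cluster X d Mm Pp p xs Rb Hio) as [c Hc].
  destruct Hxs as [Hcau Hnl]. apply Hnl. exists c. intros eta Heta.
  destruct (Hcau (eta / 2) ltac:(lra)) as [N HN]. exists N. intros m Hm'.
  destruct (Hc (eta / 2) ltac:(lra) N) as [n [Hn1 Hn2]].
  pose proof (etr (xs m) (xs n) c). pose proof (ed (xs n) c). rewrite sy in H0.
  specialize (HN m n Hm' Hn1). lra.
Qed.

Definition Hsg n := constructive_indefinite_description _ (Gg p (xs n)).
Definition sg n := proj1_sig (Hsg n).
Lemma sg_geo n : geodesic_segment d p (xs n) (sg n).
Proof. unfold sg. destruct (Hsg n). simpl. auto. Qed.
Definition D n := d p (xs n).
Definition tau n t := sg n (Rmin t (D n)).

Lemma D_nn n : 0 <= D n. Proof. apply nn. Qed.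

Lemma sg_iso n s t : 0 <= s <= D n -> 0 <= t <= D n -> d (sg n s) (sg n t) = Rabs (s - t).
Proof. intros. apply (geo_iso X d _ _ _ (sg_geo n)); auto. Qed.

Lemma sg_dist n w : 0 <= w <= D n -> d p (sg n w) = w.
Proof.
  intros H. destruct (sg_geo n) as [S0 _]. rewrite <- S0 at 1. rewrite sg_iso by (pose proof (D_nn n); lra).
  rewrite Rabs_left1 by lra. ring.
Qed.

Lemma min_range t n : 0 <= t -> 0 <= Rmin t (D n) <= D n /\ Rmin t (D n) <= t.
Proof. intros Ht. pose proof (D_nn n). split. split. apply Rmin_case; lra. apply Rmin_r. apply Rmin_l. Qed.

Lemma tau_dist n t : 0 <= t -> d p (tau n t) <= t.
Proof. intros Ht. unfold tau. destruct (min_range t n Ht) as [H1 H2]. rewrite sg_dist; auto. Qed.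

Lemma tau_lip n s t : 0 <= s -> 0 <= t -> d (tau n s) (tau n t) <= Rabs (s - t).
Proof.
  intros Hs Ht. unfold tau. destruct (min_range s n Hs) as [H1 _]. destruct (min_range t n Ht) as [H2 _].
  rewrite sg_iso by auto. pose proof (D_nn n).
  pose proof (Rle_abs (s - t)). pose proof (Rle_abs (- (s - t))). rewrite Rabs_Ropp in H3.
  unfold Rmin in *. destruct (Rle_dec s (D n)); destruct (Rle_dec t (D n)); apply Rabs_le; split; lra.
Qed.

Lemma tau_eq n t : 0 <= t <= D n -> tau n t = sg n t.
Proof. intros H. unfold tau. rewrite Rmin_left by lra. auto. Qed.

Definition Fk k n := tau n (qd k).
Lemma HB : forall k n, d p (Fk k n) <= qd k.
Proof. intros. apply tau_dist. apply qd_nn. Qed.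

Definition psi := diag X d Fk.
Lemma psi_strict : strict psi. Proof. exact (diag_strict X d Mm Pp p Fk qd HB). Qed.

Lemma conv_t t : 0 <= t -> exists c, forall eta, 0 < eta -> exists J, forall j, (J <= j)%nat -> d (tau (psi j) t) c < eta.
Proof.
  intros Ht. apply (complete X d Mm Pp p (fun j => tau (psi j) t) t). intros; apply tau_dist; auto.
  intros eta Heta. destruct (qd_dense t (eta / 3) Ht ltac:(lra)) as [k Hk].
  destruct (diag_conv X d Mm Pp p Fk qd HB k) as [c Hc]. destruct (Hc (eta / 6) ltac:(lra)) as [J HJ].
  exists J. intros i j Hi Hj. pose proof (HJ i Hi) as A1. pose proof (HJ j Hj) as A2. change (d (tau (psi i) (qd k)) c < eta / 6) in A1. change (d (tau (psi j) (qd k)) c < eta / 6) in A2.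
  pose proof (tau_lip (psi i) t (qd k) Ht (qd_nn k)). pose proof (tau_lip (psi j) (qd k) t (qd_nn k) Ht).
  rewrite Rabs_minus_sym in H.
  pose proof (tr (tau (psi i) t) (tau (psi i) (qd k)) (tau (psi j) t)).
  pose proof (tr (tau (psi i) (qd k)) c (tau (psi j) t)).
  pose proof (tr c (tau (psi j) (qd k)) (tau (psi j) t)). rewrite (sy c (tau (psi j) (qd k))) in H3.
  lra.
Qed.

Definition gam t := epsilon (inhabits p) (fun c => forall eta, 0 < eta -> exists J, forall j, (J <= j)%nat -> d (tau (psi j) t) c < eta).
Lemma gam_spec t : 0 <= t -> forall eta, 0 < eta -> exists J, forall j, (J <= j)%nat -> d (tau (psi j) t) (gam t) < eta.
Proof. intros Ht. unfold gam. apply epsilon_spec. apply conv_t; auto. Qed.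

Lemma D_large T : exists J, forall j, (J <= j)%nat -> T <= D (psi j).
Proof.
  destruct (far T) as [N HN]. exists N. intros j Hj. pose proof (strict_ge psi psi_strict j). unfold D. left. apply HN. lia.
Qed.

Lemma gam_ray : geodesic_ray d p gam.
Proof.
  split.
  - symmetry. apply (Hzero X d Mm). apply Rle_antisym; [|apply nn]. apply Rnot_lt_le. intros Hl.
    destruct (gam_spec 0 ltac:(lra) _ Hl) as [J HJ]. specialize (HJ J ltac:(lia)).
    unfold tau in HJ. rewrite Rmin_left in HJ by apply D_nn. destruct (sg_geo (psi J)) as [S0 _]. rewrite S0 in HJ. lra.
  - intros s t Hs Ht. apply eq_of_close. intros eta Heta.
    destruct (gam_spec s Hs (eta / 2) ltac:(lra)) as [J1 H1]. destruct (gam_spec t Ht (eta / 2) ltac:(lra)) as [J2 H2].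
    destruct (D_large (Rmax s t)) as [J3 H3]. set (j := max J1 (max J2 J3)).
    specialize (H1 j ltac:(unfold j; lia)). specialize (H2 j ltac:(unfold j; lia)). specialize (H3 j ltac:(unfold j; lia)).
    pose proof (Rmax_l s t). pose proof (Rmax_r s t).
    assert (d (tau (psi j) s) (tau (psi j) t) = Rabs (s - t)).
    { rewrite !tau_eq by lra. apply sg_iso; lra. }
    pose proof (tr (gam s) (tau (psi j) s) (gam t)) as T1. rewrite (sy (gam s) (tau (psi j) s)) in T1.
    pose proof (tr (tau (psi j) s) (tau (psi j) t) (gam t)) as T2.
    pose proof (tr (tau (psi j) s) (gam s) (tau (psi j) t)) as T3.
    pose proof (tr (gam s) (gam t) (tau (psi j) t)) as T4. rewrite (sy (gam t) (tau (psi j) t)) in T4.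
    apply Rabs_def1; lra.
Qed.

Lemma surj : seq_equiv e (ray_seq gam) xs.
Proof.
  intros r Hr. destruct (exp_small eps (/ eps) (r / 3) Heps ltac:(lra)) as [K0 HK0].
  destruct Hxs as [Hcau _]. destruct (Hcau (r / 3) ltac:(lra)) as [N1 HN1].
  exists (max K0 N1). intros k Hk. unfold ray_seq. set (t := INR k).
  assert (Ht : 0 <= t) by apply pos_INR.
  destruct (gam_spec t Ht (r / 3) ltac:(lra)) as [J1 HJ1]. destruct (D_large t) as [J2 HJ2].
  set (j := max J1 (max J2 N1)). set (n := psi j).
  specialize (HJ1 j ltac:(unfold j; lia)). specialize (HJ2 j ltac:(unfold j; lia)). fold n in HJ1, HJ2.
  assert (Hn : (N1 <= n)%nat) by (pose proof (strict_ge psi psi_strict j); unfold n, j in *; lia).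
  rewrite tau_eq in HJ1 by lra.
  pose proof (etr (gam t) (sg n t) (xs k)). pose proof (etr (sg n t) (xs n) (xs k)).
  pose proof (ed (gam t) (sg n t)). rewrite sy in H1.
  assert (e (sg n t) (xs n) <= exp (- eps * t) / eps).
  { destruct (sg_geo n) as [_ [SD _]]. fold (D n) in SD. rewrite <- SD.
    apply (e_out X d Mm p eps Heps). intros a b Ha Hb. apply sg_iso; lra. auto. auto.
    intros w Hw. rewrite sg_dist by lra. lra. }
  specialize (HK0 k ltac:(lia)). fold t in HK0. specialize (HN1 n k Hn ltac:(lia)). unfold Rdiv in H2. lra.
Qed.

End Surj.

Theorem lemma3p2 (X : Type) (d : X -> X -> R) (delta : R) (p : X) (eps : R) :
  gromov_hyperbolic d delta -> 0 < eps ->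
  GH_property d p eps ->
  Phi_bijective d p eps.
Proof.
  intros Hh He HGH. unfold Phi_bijective. split; [|split; [|split]].
  - intros g Hg. apply (part1 X d delta p eps Hh He g Hg).
  - intros g g' Hg Hg' Heq. apply (part2 X d delta p eps Hh He g g' Hg Hg' Heq).
  - intros g g' Hg Hg' Heq. apply (part3 X d delta p eps Hh He g g' HGH Hg Hg' Heq).
  - intros xs Hxs. exists (gam X d delta p Hh xs). split.
    + apply (gam_ray X d delta p eps Hh He xs Hxs).
    + apply (surj X d delta p eps Hh He xs Hxs).
Qed.
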